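(* Let $(\Omega,\mathbb B(\Omega),\mu,T)$ be a measure-preserving dynamical system where $\Omega$ is an interval in $\mathbb R$ and $T$ is strong-mixing, i.e. $\lim_{n\to\infty}\mu(T^{-n}A\cap B)=\mu(A)\mu(B)$ for all $A,B\in\mathbb B(\Omega)$. Then, with $\mathrm{id}$ the identity map on $\Omega$, $$\lim_{d\to\infty}\big(h^{\mathrm{id}}_{\mu,\triangle}(T,d)-h^{\mathrm{id}}_{\mu,\mathrm{cond}}(T,d)\big)=0.$$
   Context: A measure-preserving dynamical system $(\Omega,\mathbb B(\Omega),\mu,T)$: $\mathbb B(\Omega)$ the Borel $\sigma$-algebra, $\mu$ a probability measure, $T:\Omega\to\Omega$ measurable with $\mu(T^{-1}B)=\mu(B)$. For a finite partition $\mathcal P=\{P_0,\dots,P_l\}$: $H(\mathcal P)=-\sum_P\mu(P)\ln\mu(P)$ ($0\ln0=0$), and $\mathcal P_2$ consists of the sets $P_a\cap T^{-1}(P_b)$. Let $\Pi_d$ be the set of permutations of $\{0,\dots,d\}$; $(x_0,\dots,x_d)$ has ordinal pattern $\pi=(r_0,\dots,r_d)$ if $x_{r_0}\ge\dots\ge x_{r_d}$ and $r_{l-1}>r_l$ whenever $x_{r_{l-1}}=x_{r_l}$. The ordinal partition $\mathcal P^{\mathrm{id}}(d)$ consists of the sets $P_\pi=\{\omega\in\Omega:(T^d\omega,T^{d-1}\omega,\dots,T\omega,\omega)\text{ has ordinal pattern }\pi\}$, $\pi\in\Pi_d$. Sorting entropy: $h^{\mathrm{id}}_{\mu,\triangle}(T,d)=H(\mathcal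 P^{\mathrm{id}}(d+1))-H(\mathcal P^{\mathrm{id}}(d))$. Conditional entropy of ordinal patterns: $h^{\mathrm{id}}_{\mu,\mathrm{cond}}(T,d)=H(\mathcal P^{\mathrm{id}}(d)_2)-H(\mathcal P^{\mathrm{id}}(d))$. *)

(* Defs.v *)
From Stdlib Require Import Reals List.
Import ListNotations.
Open Scope R_scope.

Definition is_interval (I : R -> Prop) : Prop :=
  forall x y z, I x -> I z -> x <= y -> y <= z -> I y.

Definition Omega (I : R -> Prop) : Type := { x : R | I x }.

Definition rel_open (I : R -> Prop) (U : Omega I -> Prop) : Prop :=
  forall x, U x -> exists eps, 0 < eps /\
    forall y : Omega I, Rabs (proj1_sig y - proj1_sig x) < eps -> U y.

Definition is_sigma_algebra {X : Type} (F : (X -> Prop) -> Prop) : Prop :=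
  F (fun _ => True) /\
  (forall A, F A -> F (fun x => ~ A x)) /\
  (forall A : nat -> X -> Prop, (forall n, F (A n)) -> F (fun x => exists n, A n x)).

Definition Borel (I : R -> Prop) (A : Omega I -> Prop) : Prop :=
  forall F : (Omega I -> Prop) -> Prop,
    is_sigma_algebra F -> (forall U, rel_open I U -> F U) -> F A.

Definition is_prob_measure {X : Type} (F : (X -> Prop) -> Prop)
  (mu : (X -> Prop) -> R) : Prop :=
  (forall A, F A -> 0 <= mu A) /\
  mu (fun _ => True) = 1 /\
  (forall A : nat -> X -> Prop,
     (forall n, F (A n)) ->
     (forall m n x, m <> n -> A m x -> A n x -> False) ->
     infinite_sum (fun n => mu (A n)) (mu (fun x => exists n, A n x))).

Definition preimage {X : Type} (T : X -> X) (B : X -> Prop) : X -> Prop :=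
  fun x => B (T x).

Definition measurable_map {X : Type} (F : (X -> Prop) -> Prop) (T : X -> X) : Prop :=
  forall B, F B -> F (preimage T B).

Definition measure_preserving {X : Type} (F : (X -> Prop) -> Prop)
  (mu : (X -> Prop) -> R) (T : X -> X) : Prop :=
  forall B, F B -> mu (preimage T B) = mu B.

Fixpoint iterT {X : Type} (n : nat) (T : X -> X) (x : X) : X :=
  match n with O => x | S k => T (iterT k T x) end.

Definition strong_mixing {X : Type} (F : (X -> Prop) -> Prop)
  (mu : (X -> Prop) -> R) (T : X -> X) : Prop :=
  forall A B, F A -> F B ->
    Un_cv (fun n => mu (fun x => A (iterT n T x) /\ B x)) (mu A * mu B).

Fixpoint insert_all (x : nat) (l : list nat) : list (list nat) :=
  match l with
  | [] => [[x]]
  | y :: t => (x :: y :: t) :: map (cons y) (insert_all x t)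
  end.

Fixpoint perms (l : list nat) : list (list nat) :=
  match l with
  | [] => [[]]
  | x :: t => flat_map (insert_all x) (perms t)
  end.

Definition Pi (d : nat) : list (list nat) := perms (seq 0 (S d)).

Definition has_pattern (d : nat) (x : nat -> R) (pi : list nat) : Prop :=
  forall l, (1 <= l <= d)%nat ->
    x (nth (l - 1) pi 0%nat) >= x (nth l pi 0%nat) /\
    (x (nth (l - 1) pi 0%nat) = x (nth l pi 0%nat) ->
       (nth (l - 1) pi 0%nat > nth l pi 0%nat)%nat).

Definition P_pat {X : Type} (val : X -> R) (T : X -> X) (d : nat)
  (pi : list nat) : X -> Prop :=
  fun w => has_pattern d (fun k => val (iterT (d - k) T w)) pi.

Definition eta (p : R) : R := if Req_EM_T p 0 then 0 else - p * ln p.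

Definition Rsum_list (l : list R) : R := fold_right Rplus 0 l.

Definition H_ord {X : Type} (mu : (X -> Prop) -> R) (val : X -> R)
  (T : X -> X) (d : nat) : R :=
  Rsum_list (map (fun pi => eta (mu (P_pat val T d pi))) (Pi d)).

Definition H_ord2 {X : Type} (mu : (X -> Prop) -> R) (val : X -> R)
  (T : X -> X) (d : nat) : R :=
  Rsum_list (flat_map (fun a =>
    map (fun b => eta (mu (fun w => P_pat val T d a w /\ P_pat val T d b (T w))))
      (Pi d)) (Pi d)).

Definition h_sort {X : Type} (mu : (X -> Prop) -> R) (val : X -> R)
  (T : X -> X) (d : nat) : R :=
  H_ord mu val T (S d) - H_ord mu val T d.

Definition h_cond {X : Type} (mu : (X -> Prop) -> R) (val : X -> R)
  (T : X -> X) (d : nat) : R :=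
  H_ord2 mu val T d - H_ord mu val T d.

(* Main.v *)
Require Import Defs.
From Stdlib Require Import ZArith Reals Lra Lia List Permutation Sorting.Sorted.
From Stdlib Require Import Classical FunctionalExtensionality PropExtensionality ProofIrrelevance IndefiniteDescription.
Import ListNotations.
Open Scope R_scope.

Lemma set_ext {X : Type} (A B : X -> Prop) : (forall x, A x <-> B x) -> A = B.
Proof. intro H; apply functional_extensionality; intro x; apply propositional_extensionality; auto. Qed.

Lemma sa_T {X} (F : (X -> Prop) -> Prop) : is_sigma_algebra F -> F (fun _ => True).
Proof. intros [H _]; exact H. Qed.
Lemma sa_C {X} (F : (X -> Prop) -> Prop) A : is_sigma_algebra F -> F A -> F (fun x => ~ A x).
Proof. intros [_ [H _]]; auto. Qed.
Lemma sa_U {X} (F : (X -> Prop) -> Prop) (A : nat -> X -> Prop) : is_sigma_algebra F ->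
  (forall n, F (A n)) -> F (fun x => exists n, A n x).
Proof. intros [_ [_ H]]; auto. Qed.
Lemma sa_ext {X} (F : (X -> Prop) -> Prop) A B : F A -> (forall x, A x <-> B x) -> F B.
Proof. intros H E; rewrite <- (set_ext _ _ E); auto. Qed.
Lemma sa_F {X} (F : (X -> Prop) -> Prop) : is_sigma_algebra F -> F (fun _ => False).
Proof. intro HF. apply (sa_ext F (fun x => ~ True)). apply sa_C; auto. apply sa_T; auto. tauto. Qed.
Lemma sa_or {X} (F : (X -> Prop) -> Prop) A B : is_sigma_algebra F -> F A -> F B -> F (fun x => A x \/ B x).
Proof. intros HF HA HB.
  apply (sa_ext F (fun x => exists n, (match n with O => A | _ => B end) x)).
  apply sa_U; auto. intros [|n]; auto.
  intro x; split. intros [[|n] H]; auto. intros [H|H]. exists O; auto. exists 1%nat; auto. Qed.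
Lemma sa_and {X} (F : (X -> Prop) -> Prop) A B : is_sigma_algebra F -> F A -> F B -> F (fun x => A x /\ B x).
Proof. intros HF HA HB.
  apply (sa_ext F (fun x => ~ (~ A x \/ ~ B x))).
  apply sa_C; auto; apply sa_or; auto; apply sa_C; auto.
  intro x; tauto. Qed.
Lemma sa_const {X} (F : (X -> Prop) -> Prop) (P : Prop) : is_sigma_algebra F -> F (fun _ => P).
Proof. intro HF. destruct (classic P).
  apply (sa_ext F (fun _ => True)); [apply sa_T; auto| tauto].
  apply (sa_ext F (fun _ => False)); [apply sa_F; auto| tauto]. Qed.
Lemma sa_impl {X} (F : (X -> Prop) -> Prop) A B : is_sigma_algebra F -> F A -> F B -> F (fun x => A x -> B x).
Proof. intros HF HA HB.
  apply (sa_ext F (fun x => ~ A x \/ B x)).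
  apply sa_or; auto; apply sa_C; auto. intro x; tauto. Qed.
Lemma sa_forall {X} (F : (X -> Prop) -> Prop) (A : nat -> X -> Prop) : is_sigma_algebra F ->
  (forall n, F (A n)) -> F (fun x => forall n, A n x).
Proof. intros HF HA.
  apply (sa_ext F (fun x => ~ exists n, ~ A n x)).
  apply sa_C; auto; apply sa_U; auto; intro n; apply sa_C; auto.
  intro x; split. intros H n. apply NNPP; intro; apply H; eauto. intros H [n Hn]; auto. Qed.
Lemma sa_forall_g {X} (F : (X -> Prop) -> Prop) (P : nat -> Prop) (A : nat -> X -> Prop) : is_sigma_algebra F ->
  (forall n, F (A n)) -> F (fun x => forall n, P n -> A n x).
Proof. intros HF HA. apply (sa_forall F (fun n x => P n -> A n x)); auto.
  intro n; apply sa_impl; auto; apply sa_const; auto. Qed.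

Definition meas {X} (F : (X -> Prop) -> Prop) (g : X -> R) := forall c, F (fun x => g x < c).

Lemma meas_ge {X} F (g : X -> R) c : is_sigma_algebra F -> meas F g -> F (fun x => g x >= c).
Proof. intros HF Hg. apply (sa_ext F (fun x => ~ g x < c)). apply sa_C; auto. intro; lra. Qed.

Lemma inv_small eps : 0 < eps -> exists n, / INR (S n) < eps.
Proof. intro H. destruct (archimed_cor1 eps H) as [N [H1 H2]].
  exists (pred N). replace (S (pred N)) with N by lia. auto. Qed.

Lemma INRS_pos n : 0 < INR (S n).
Proof. apply lt_0_INR; lia. Qed.

Lemma meas_gt {X} F (g : X -> R) c : is_sigma_algebra F -> meas F g -> F (fun x => c < g x).
Proof. intros HF Hg. apply (sa_ext F (fun x => exists n, g x >= c + / INR (S n))).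
  apply sa_U; auto; intro n; apply meas_ge; auto.
  intro x; split. intros [n Hn]. pose proof (INRS_pos n). assert (0 < / INR (S n)) by (apply Rinv_0_lt_compat; lra). lra.
  intro H. destruct (inv_small (g x - c)) as [n Hn]. lra. exists n; lra. Qed.
Lemma meas_le {X} F (g : X -> R) c : is_sigma_algebra F -> meas F g -> F (fun x => g x <= c).
Proof. intros HF Hg. apply (sa_ext F (fun x => ~ c < g x)). apply sa_C; auto; apply meas_gt; auto. intro; lra. Qed.

Lemma sa_UZ {X} (F : (X -> Prop) -> Prop) (A : Z -> X -> Prop) : is_sigma_algebra F ->
  (forall z, F (A z)) -> F (fun x => exists z, A z x).
Proof. intros HF HA.
  apply (sa_ext F (fun x => exists n, A (Z.of_nat n) x \/ A (- Z.of_nat n)%Z x)).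
  apply sa_U; auto; intro; apply sa_or; auto.
  intro x; split. intros [n [H|H]]; eauto.
  intros [z Hz]. destruct z as [|p|p].
  exists O; auto. exists (Pos.to_nat p); left; rewrite positive_nat_Z; auto.
  exists (Pos.to_nat p); right; rewrite positive_nat_Z; auto. Qed.

Lemma density a b : a < b -> exists n (z : Z), a < IZR z / INR (S n) < b.
Proof. intro H. destruct (inv_small (b - a)) as [n Hn]. lra.
  pose proof (INRS_pos n) as Hp.
  exists n, (up (a * INR (S n))). destruct (archimed (a * INR (S n))) as [H1 H2].
  split.
  - apply (Rmult_lt_reg_r (INR (S n))); auto. unfold Rdiv; rewrite Rmult_assoc, Rinv_l; lra.
  - apply (Rmult_lt_reg_r (INR (S n))); auto. unfold Rdiv; rewrite Rmult_assoc, Rinv_l by lra.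
    assert (/ INR (S n) * INR (S n) = 1) by (apply Rinv_l; lra).
    assert (b * INR (S n) > a * INR (S n) + 1). {
      assert ((b - a) * INR (S n) > / INR (S n) * INR (S n)) by (apply Rmult_gt_compat_r; lra). nra. }
    lra. Qed.

Lemma meas_lt2 {X} F (g h : X -> R) : is_sigma_algebra F -> meas F g -> meas F h -> F (fun x => g x < h x).
Proof. intros HF Hg Hh.
  apply (sa_ext F (fun x => exists n, exists z, g x < IZR z / INR (S n) /\ IZR z / INR (S n) < h x)).
  apply sa_U; auto; intro n; apply sa_UZ; auto; intro z; apply sa_and; auto. apply meas_gt; auto.
  intro x; split. intros [n [z [H1 H2]]]; lra.
  intro H; destruct (density _ _ H) as [n [z Hz]]; exists n, z; lra. Qed.

Lemma meas_le2 {X} F (g h : X -> R) : is_sigma_algebra F -> meas F g -> meas F h -> F (fun x => g x <= h x).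
Proof. intros HF Hg Hh. apply (sa_ext F (fun x => ~ h x < g x)). apply sa_C; auto; apply meas_lt2; auto. intro; lra. Qed.
Lemma meas_eq2 {X} F (g h : X -> R) : is_sigma_algebra F -> meas F g -> meas F h -> F (fun x => g x = h x).
Proof. intros HF Hg Hh. apply (sa_ext F (fun x => g x <= h x /\ h x <= g x)). apply sa_and; auto; [apply (meas_le2 F g h)|apply (meas_le2 F h g)]; auto. intro; lra. Qed.
Lemma meas_const {X} F (c : R) : is_sigma_algebra F -> meas F (fun _ : X => c).
Proof. intros HF d; apply sa_const; auto. Qed.

Lemma borel_sa I : is_sigma_algebra (Borel I).
Proof. unfold is_sigma_algebra. refine (conj _ (conj _ _)).
  - intros G HG HO; apply (sa_T G); auto.
  - intros A HA G HG HO. apply (sa_C G); auto. apply HA; auto.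
  - intros A HA G HG HO. apply (sa_U G); auto. intro n; apply HA; auto. Qed.

Lemma meas_val I : meas (Borel I) (@proj1_sig R I).
Proof. intros c G HG HO. apply HO. intros x Hx. cbv beta in *. exists (c - proj1_sig x); split. set (a := proj1_sig x) in *. lra.
  intros y Hy. apply Rabs_def2 in Hy. set (a := proj1_sig x) in *. set (b := proj1_sig y) in *. lra. Qed.

Lemma meas_comp {X} F (T : X -> X) g : measurable_map F T -> meas F g -> meas F (fun x => g (T x)).
Proof. intros HT Hg c. apply (HT (fun x => g x < c)). auto. Qed.

Lemma meas_iter {X} F (T : X -> X) n : measurable_map F T -> forall g, meas F g -> meas F (fun x => g (iterT n T x)).
Proof. intro HT. induction n; intros g Hg; simpl. exact Hg.
  apply (IHn (fun x => g (T x))). apply meas_comp; auto. Qed.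

Lemma iterT_shift {X} (T : X -> X) n x : iterT n T (T x) = iterT (S n) T x.
Proof. induction n; simpl; auto. rewrite IHn; auto. Qed.
Lemma sum_const_zero c l : infinite_sum (fun _ => c) l -> c = 0.
Proof. intro H. destruct (Req_dec c 0) as [E|E]; auto.
  assert (Hp : Rabs c / 2 > 0) by (apply Rabs_pos_lt in E; lra).
  destruct (H _ Hp) as [N HN].
  pose proof (HN N (le_n _)) as H1. pose proof (HN (S N) (le_S _ _ (le_n _))) as H2.
  unfold Rdist in *. simpl in H2. set (s := sum_f_R0 (fun _ => c) N) in *.
  destruct (Rcase_abs c); [rewrite (Rabs_left c) in *|rewrite (Rabs_right c) in *]; auto;
  apply Rabs_def2 in H1; apply Rabs_def2 in H2; lra. Qed.

Lemma sum_eventually f l s : infinite_sum f l -> (forall n, (n >= 1)%nat -> sum_f_R0 f n = s) -> l = s.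
Proof. intros H Hs. apply NNPP; intro E.
  assert (Hp : Rabs (l - s) > 0) by (apply Rabs_pos_lt; lra).
  destruct (H _ Hp) as [N HN]. specialize (HN (S N) ltac:(lia)). rewrite Hs in HN by lia.
  unfold Rdist in HN. rewrite Rabs_minus_sym in HN. lra. Qed.

Lemma mu_ext {X} (mu : (X -> Prop) -> R) A B : (forall x, A x <-> B x) -> mu A = mu B.
Proof. intro H; rewrite (set_ext _ _ H); auto. Qed.

Lemma mu_empty {X} F (mu : (X -> Prop) -> R) : is_sigma_algebra F -> is_prob_measure F mu -> mu (fun _ => False) = 0.
Proof. intros HF [H0 [H1 H2]].
  specialize (H2 (fun _ _ => False) (fun _ => sa_F F HF) ltac:(tauto)). cbv beta in H2.
  rewrite (mu_ext mu (fun x => exists n : nat, False) (fun _ => False)) in H2 by (intro; split; [intros [_ []]|tauto]).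
  apply sum_const_zero in H2; auto. Qed.

Lemma mu_zero {X} F (mu : (X -> Prop) -> R) A : is_sigma_algebra F -> is_prob_measure F mu -> (forall x, ~ A x) -> mu A = 0.
Proof. intros HF Hm H. rewrite (mu_ext mu A (fun _ => False)) by (intro x; split; [apply H|tauto]).
  apply (mu_empty F); auto. Qed.

Lemma mu_ge0 {X} F (mu : (X -> Prop) -> R) A : is_prob_measure F mu -> F A -> 0 <= mu A.
Proof. intros [H _]; auto. Qed.

Lemma mu_add {X} F (mu : (X -> Prop) -> R) A B : is_sigma_algebra F -> is_prob_measure F mu -> F A -> F B ->
  (forall x, A x -> B x -> False) -> mu (fun x => A x \/ B x) = mu A + mu B.
Proof. intros HF Hm HA HB D. pose proof Hm as [H0 [H1 H2]].
  set (C := fun n : nat => match n with O => A | 1%nat => B | _ => fun _ => False end).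
  specialize (H2 C). 
  assert (HC : forall n, F (C n)) by (intros [|[|n]]; simpl; auto; apply sa_F; auto).
  specialize (H2 HC).
  assert (forall m n x, m <> n -> C m x -> C n x -> False) as HD.
  { intros [|[|m]] [|[|n]] x Hmn; simpl; try tauto; intros; try (eapply D; eauto); lia. }
  specialize (H2 HD). cbv beta in H2.
  rewrite (mu_ext mu (fun x => exists n, C n x) (fun x => A x \/ B x)) in H2.
  2:{ intro x; split. intros [[|[|n]] Hn]; simpl in Hn; tauto.
      intros [H|H]. exists O; auto. exists 1%nat; auto. }
  apply (sum_eventually _ _ _ H2). intros n Hn. induction n. lia.
  destruct n. simpl. unfold C. lra.
  simpl sum_f_R0. simpl sum_f_R0 in IHn. rewrite IHn by lia. unfold C. rewrite (mu_empty F) by auto. lra. Qed.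

Lemma mu_split {X} F (mu : (X -> Prop) -> R) A B : is_sigma_algebra F -> is_prob_measure F mu -> F A -> F B ->
  mu A = mu (fun x => A x /\ B x) + mu (fun x => A x /\ ~ B x).
Proof. intros HF Hm HA HB. rewrite <- (mu_add F); auto.
  apply mu_ext; intro x; tauto. apply sa_and; auto. apply sa_and; auto. apply sa_C; auto. tauto. Qed.

Lemma mu_mono {X} F (mu : (X -> Prop) -> R) A B : is_sigma_algebra F -> is_prob_measure F mu -> F A -> F B ->
  (forall x, A x -> B x) -> mu A <= mu B.
Proof. intros HF Hm HA HB H. rewrite (mu_split F mu B A); auto.
  rewrite (mu_ext mu (fun x => B x /\ A x) A) by (intro x; split; [tauto|auto]).
  assert (0 <= mu (fun x => B x /\ ~ A x)). apply (mu_ge0 F); auto. apply sa_and; auto; apply sa_C; auto.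
  lra. Qed.

Lemma mu_True {X} F (mu : (X -> Prop) -> R) : is_prob_measure F mu -> mu (fun _ => True) = 1.
Proof. intros [_ [H _]]; auto. Qed.

Lemma mu_le1 {X} F (mu : (X -> Prop) -> R) A : is_sigma_algebra F -> is_prob_measure F mu -> F A -> mu A <= 1.
Proof. intros HF Hm HA. rewrite <- (mu_True F mu Hm). apply (mu_mono F); auto. apply sa_T; auto. Qed.

Lemma mu_compl {X} F (mu : (X -> Prop) -> R) A : is_sigma_algebra F -> is_prob_measure F mu -> F A ->
  mu (fun x => ~ A x) = 1 - mu A.
Proof. intros HF Hm HA. rewrite <- (mu_True F mu Hm).
  rewrite (mu_split F mu (fun _ => True) A); auto. 2: apply sa_T; auto.
  rewrite (mu_ext mu (fun x => True /\ A x) A) by tauto.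
  rewrite (mu_ext mu (fun x => True /\ ~ A x) (fun x => ~ A x)) by tauto. lra. Qed.

Lemma mu_union_le {X} F (mu : (X -> Prop) -> R) A B : is_sigma_algebra F -> is_prob_measure F mu -> F A -> F B ->
  mu (fun x => A x \/ B x) <= mu A + mu B.
Proof. intros HF Hm HA HB.
  rewrite (mu_ext mu (fun x => A x \/ B x) (fun x => A x \/ (B x /\ ~ A x))) by (intro; tauto).
  rewrite (mu_add F); auto. 2: apply sa_and; auto; apply sa_C; auto. 2: tauto.
  assert (mu (fun x => B x /\ ~ A x) <= mu B). apply (mu_mono F); auto. apply sa_and; auto; apply sa_C; auto. tauto.
  lra. Qed.

Lemma mu_pos_inh {X} F (mu : (X -> Prop) -> R) A : is_sigma_algebra F -> is_prob_measure F mu ->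
  0 < mu A -> exists x, A x.
Proof. intros HF Hm H. apply NNPP; intro N. rewrite (mu_zero F mu A) in H; auto. lra.
  intros x Hx; apply N; eauto. Qed.

Lemma Un_cv_ext u v l : (forall n, u n = v n) -> Un_cv u l -> Un_cv v l.
Proof. intros E H eps He. destruct (H eps He) as [N HN]. exists N; intros n Hn. rewrite <- E; auto. Qed.

Lemma Un_cv_const c : Un_cv (fun _ => c) c.
Proof. intros eps He. exists O; intros. unfold Rdist. rewrite Rminus_diag, Rabs_R0; lra. Qed.

Lemma mu_chain_mono {X} (A : nat -> X -> Prop) : (forall n x, A n x -> A (S n) x) ->
  forall m k x, (m <= k)%nat -> A m x -> A k x.
Proof. intros H m k x Hmk. induction Hmk; auto. Qed.

Lemma mu_cont_below {X} F (mu : (X -> Prop) -> R) (A : nat -> X -> Prop) : is_sigma_algebra F -> is_prob_measure F mu ->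
  (forall n, F (A n)) -> (forall n x, A n x -> A (S n) x) ->
  Un_cv (fun n => mu (A n)) (mu (fun x => exists n, A n x)).
Proof. intros HF Hm HA Hinc. pose proof Hm as [_ [_ H2]].
  set (D := fun n : nat => match n with O => A O | S k => fun x => A (S k) x /\ ~ A k x end).
  assert (HD : forall n, F (D n)). { intros [|n]; simpl; auto. apply sa_and; auto. apply sa_C; auto. }
  assert (Hdisj : forall m n x, m <> n -> D m x -> D n x -> False).
  { assert (forall m n x, (m < n)%nat -> D m x -> D n x -> False).
    { intros m n x Hmn Hm' Hn'. destruct n as [|n]. lia. simpl in Hn'. destruct Hn' as [_ Hn'].
      apply Hn'. apply (mu_chain_mono A Hinc m n); [lia|]. destruct m; simpl in Hm'; tauto. }
    intros m n x Hmn. destruct (Nat.lt_gt_cases m n) as [[Hl|Hl] _]; auto.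
    intros; eapply H; eauto. intros; eapply H; eauto. }
  specialize (H2 D HD Hdisj). cbv beta in H2.
  rewrite (mu_ext mu (fun x => exists n, D n x) (fun x => exists n, A n x)) in H2.
  2:{ intro x; split.
      - intros [[|n] Hn]; simpl in Hn. eauto. exists (S n); tauto.
      - intros [n Hn]. induction n. exists O; auto. destruct (classic (A n x)) as [Ha|Ha]; auto.
        exists (S n); simpl; auto. }
  assert (Hs : forall n, sum_f_R0 (fun n => mu (D n)) n = mu (A n)).
  { induction n. simpl; auto. simpl sum_f_R0. rewrite IHn.
    rewrite (mu_split F mu (A (S n)) (A n)); auto. simpl.
    rewrite (mu_ext mu (fun x => A (S n) x /\ A n x) (A n)); auto.
    intro x; split; [tauto| intro; split; auto]. }
  intros eps He. destruct (H2 eps He) as [N HN]. exists N; intros n Hn. rewrite <- Hs; auto. Qed.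

Lemma mu_cont_above {X} F (mu : (X -> Prop) -> R) (A : nat -> X -> Prop) : is_sigma_algebra F -> is_prob_measure F mu ->
  (forall n, F (A n)) -> (forall n x, A (S n) x -> A n x) ->
  Un_cv (fun n => mu (A n)) (mu (fun x => forall n, A n x)).
Proof. intros HF Hm HA Hdec.
  pose proof (mu_cont_below F mu (fun n x => ~ A n x) HF Hm) as H.
  assert (H' := H (fun n => sa_C F _ HF (HA n)) ltac:(intros n x Hx Hy; apply Hx; auto)). cbv beta in H'.
  rewrite (mu_ext mu (fun x => exists n, ~ A n x) (fun x => ~ forall n, A n x)) in H'.
  2:{ intro x; split. intros [n Hn] Hall; auto. intro Hn; apply NNPP; intro N; apply Hn; intro n; apply NNPP; intro; apply N; eauto. }
  rewrite (mu_compl F) in H'; auto. 2: apply sa_forall; auto.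
  pose proof (CV_minus _ _ _ _ (Un_cv_const 1) H') as H3.
  replace (1 - (1 - mu (fun x => forall n, A n x))) with (mu (fun x => forall n, A n x)) in H3 by ring.
  apply (Un_cv_ext _ _ _ ) with (2 := H3). intro n. simpl. rewrite (mu_compl F); auto. ring. Qed.
Lemma Rsum_cons a l : Rsum_list (a :: l) = a + Rsum_list l.
Proof. reflexivity. Qed.
Lemma Rsum_plus {A} (f g : A -> R) L : Rsum_list (map (fun i => f i + g i) L) = Rsum_list (map f L) + Rsum_list (map g L).
Proof. induction L; simpl; [lra|]. unfold Rsum_list in *; simpl in *. rewrite IHL; ring. Qed.
Lemma Rsum_minus {A} (f g : A -> R) L : Rsum_list (map (fun i => f i - g i) L) = Rsum_list (map f L) - Rsum_list (map g L).
Proof. induction L; simpl; [unfold Rsum_list; simpl; lra|]. unfold Rsum_list in *; simpl in *. rewrite IHL; ring. Qed.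
Lemma Rsum_scal {A} (f : A -> R) c L : Rsum_list (map (fun i => c * f i) L) = c * Rsum_list (map f L).
Proof. induction L; unfold Rsum_list in *; simpl in *; [ring|]. rewrite IHL; ring. Qed.
Lemma Rsum_ext {A} (f g : A -> R) L : (forall i, In i L -> f i = g i) -> Rsum_list (map f L) = Rsum_list (map g L).
Proof. intro H. induction L; unfold Rsum_list in *; simpl in *; auto. rewrite H, IHL; auto. Qed.
Lemma Rsum_le {A} (f g : A -> R) L : (forall i, In i L -> f i <= g i) -> Rsum_list (map f L) <= Rsum_list (map g L).
Proof. intro H. induction L; unfold Rsum_list in *; simpl in *; [lra|].
  assert (f a <= g a) by auto. assert (fold_right Rplus 0 (map f L) <= fold_right Rplus 0 (map g L)) by auto. lra. Qed.
Lemma Rsum_nonneg {A} (f : A -> R) L : (forall i, In i L -> 0 <= f i) -> 0 <= Rsum_list (map f L).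
Proof. intro H. induction L; unfold Rsum_list in *; simpl in *; [lra|].
  assert (0 <= f a) by auto. assert (0 <= fold_right Rplus 0 (map f L)) by auto. lra. Qed.
Lemma Rsum_zero {A} (f : A -> R) L : (forall i, In i L -> f i = 0) -> Rsum_list (map f L) = 0.
Proof. intro H. induction L; unfold Rsum_list in *; simpl in *; auto. rewrite H, IHL; auto; ring. Qed.
Lemma Rsum_swap {A B} (g : A -> B -> R) L1 L2 :
  Rsum_list (map (fun i => Rsum_list (map (g i) L2)) L1) = Rsum_list (map (fun j => Rsum_list (map (fun i => g i j) L1)) L2).
Proof. induction L1. simpl. symmetry. apply Rsum_zero. intros; reflexivity.
  cbn [map]. rewrite Rsum_cons, IHL1.
  rewrite <- (Rsum_plus (g a) (fun j => Rsum_list (map (fun i => g i j) L1))). apply Rsum_ext. intros; simpl; reflexivity. Qed.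
Lemma Rsum_single {A} (f : A -> R) L i0 : NoDup L -> In i0 L -> (forall i, In i L -> i <> i0 -> f i = 0) ->
  Rsum_list (map f L) = f i0.
Proof. intros ND. induction ND as [|a L Ha ND IH]. simpl; tauto.
  intros Hi H. cbn [map]. rewrite Rsum_cons. destruct (classic (a = i0)) as [E|E].
  - subst. rewrite Rsum_zero. ring. intros i Hi'. apply H; simpl; auto. intro; subst; contradiction.
  - destruct Hi as [Hi|Hi]. congruence. rewrite IH; auto. rewrite H; simpl; auto. ring. intros i Hi' Hne; apply H; simpl; auto. Qed.

Lemma part_sum {X Ix} F (mu : (X -> Prop) -> R) (L : list Ix) (S : Ix -> X -> Prop) :
  is_sigma_algebra F -> is_prob_measure F mu -> NoDup L -> (forall i, In i L -> F (S i)) ->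
  (forall i j x, In i L -> In j L -> i <> j -> S i x -> S j x -> False) ->
  forall E, F E -> (forall x, E x -> exists i, In i L /\ S i x) ->
  Rsum_list (map (fun i => mu (fun x => S i x /\ E x)) L) = mu E.
Proof. intros HF Hm ND. induction ND as [|a L Ha ND IH]; intros HS Hd E HE Hc.
  - simpl. symmetry. apply (mu_zero F); auto. intros x Hx. destruct (Hc x Hx) as [i [[] _]].
  - cbn [map]. rewrite Rsum_cons.
    rewrite (Rsum_ext _ (fun i => mu (fun x => S i x /\ (E x /\ ~ S a x)))).
    2:{ intros i Hi. apply mu_ext. intro x. split; [|tauto]. intros [H1 H2]; repeat split; auto.
        intro H3. apply (Hd i a x); simpl; auto. intro; subst; tauto. }
    rewrite (IH ltac:(intros; apply HS; simpl; auto) ltac:(intros i j x Hi Hj Hij; apply (Hd i j x); simpl; auto) (fun x => E x /\ ~ S a x)).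
    + rewrite (mu_split F mu E (S a)); auto. 2: apply HS; simpl; auto.
      rewrite (mu_ext mu (fun x => S a x /\ E x) (fun x => E x /\ S a x)) by (intro; tauto). ring.
    + apply sa_and; auto. apply sa_C; auto. apply HS; simpl; auto.
    + intros x [Hx Hn]. destruct (Hc x Hx) as [i [[Hi|Hi] Hs]]. subst; tauto. eauto.
Qed.
Lemma ns_sum {X Ix} F (mu : (X -> Prop) -> R) (L : list Ix) (S : Ix -> X -> Prop) (g : R -> R) :
  is_sigma_algebra F -> is_prob_measure F mu -> NoDup L ->
  (forall i j x, In i L -> In j L -> i <> j -> S i x -> S j x -> False) ->
  forall E, (forall x, E x -> exists i, In i L /\ S i x) ->
  (forall x y i, In i L -> E x -> E y -> S i x -> S i y) -> g 0 = 0 ->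
  Rsum_list (map (fun i => g (mu (fun x => S i x /\ E x))) L) = g (mu E).
Proof. intros HF Hm ND Hd E Hc Hns g0.
  destruct (classic (exists x, E x)) as [[x0 Hx0]|N].
  - destruct (Hc x0 Hx0) as [i0 [Hi0 Hs0]].
    rewrite (Rsum_single _ _ i0); auto.
    + f_equal. apply mu_ext. intro x; split; [tauto|]. intro Hx; split; auto. eapply Hns; eauto.
    + intros i Hi Hne. rewrite (mu_zero F mu); auto. intros x [H1 H2].
      apply (Hd i i0 x); auto. eapply Hns; eauto.
  - rewrite (mu_zero F mu E); auto. rewrite g0. apply Rsum_zero. intros i Hi. rewrite (mu_zero F mu); auto.
    intros x [_ H]; eauto. intros x Hx; eauto.
Qed.
Definition relx (x : nat -> R) (i j : nat) : Prop := x i > x j \/ (x i = x j /\ (i > j)%nat).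

Lemma relx_irr x i : ~ relx x i i.
Proof. unfold relx; intros [H|[_ H]]; [lra|lia]. Qed.
Lemma relx_trans x i j k : relx x i j -> relx x j k -> relx x i k.
Proof. unfold relx; intros [H1|[H1 H1']] [H2|[H2 H2']]; [left; lra|left; lra|left; lra|right; split; [lra|lia]]. Qed.
Lemma relx_asym x i j : relx x i j -> relx x j i -> False.
Proof. intros H1 H2. apply (relx_irr x i). eapply relx_trans; eauto. Qed.
Lemma relx_total x i j : i <> j -> relx x i j \/ relx x j i.
Proof. intro H. unfold relx. destruct (Rtotal_order (x i) (x j)) as [E|[E|E]].
  right; left; lra. destruct (proj1 (Nat.lt_gt_cases i j) H) as [Hl|Hl].
  right; right; split; auto; lia. left; right; split; auto; lia. left; left; lra. Qed.

Lemma hp_iff d x pi : has_pattern d x pi <-> forall l, (1 <= l <= d)%nat -> relx x (nth (l - 1) pi 0%nat) (nth l pi 0%nat).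
Proof. unfold has_pattern, relx. split; intros H l Hl; specialize (H l Hl).
  - destruct H as [H1 H2]. destruct (Req_dec (x (nth (l - 1) pi 0%nat)) (x (nth l pi 0%nat))) as [E|E].
    right; auto. left; lra.
  - destruct H as [H|[H1 H2]]. split. lra. intro; lra. split. lra. auto. Qed.

Lemma insert_all_perm a t p : In p (insert_all a t) -> Permutation p (a :: t).
Proof. revert p; induction t as [|b t IH]; simpl; intros p Hp.
  - destruct Hp as [<-|[]]; auto.
  - destruct Hp as [<-|Hp]; auto. apply in_map_iff in Hp. destruct Hp as [q [<- Hq]].
    apply IH in Hq. eapply perm_trans. apply perm_skip; exact Hq. apply perm_swap. Qed.
Lemma perms_perm l p : In p (perms l) -> Permutation p l.
Proof. revert p; induction l as [|a t IH]; simpl; intros p Hp.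
  - destruct Hp as [<-|[]]; auto.
  - apply in_flat_map in Hp. destruct Hp as [q [Hq Hp]]. apply insert_all_perm in Hp.
    eapply perm_trans; eauto. Qed.
Lemma insert_all_in a l1 l2 : In (l1 ++ a :: l2) (insert_all a (l1 ++ l2)).
Proof. induction l1 as [|b l1 IH]; simpl.
  - destruct l2; simpl; auto.
  - right. apply in_map; auto. Qed.
Lemma perm_perms l p : Permutation p l -> In p (perms l).
Proof. revert p; induction l as [|a t IH]; intros p Hp.
  - apply Permutation_sym, Permutation_nil in Hp; subst; simpl; auto.
  - destruct (Permutation_vs_cons_inv Hp) as [l1 [l2 E]]. subst p.
    assert (Permutation (l1 ++ l2) t).
    { apply (Permutation_cons_inv (a := a)). eapply perm_trans; [|exact Hp]. apply Permutation_middle. }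
    simpl. apply in_flat_map. exists (l1 ++ l2); split; auto. apply insert_all_in. Qed.

Lemma insert_all_split a t p : In p (insert_all a t) -> exists l1 l2, p = l1 ++ a :: l2 /\ t = l1 ++ l2.
Proof. revert p; induction t as [|b t IH]; simpl; intros p Hp.
  - destruct Hp as [<-|[]]. exists [], []; auto.
  - destruct Hp as [<-|Hp]. exists [], (b :: t); auto.
    apply in_map_iff in Hp. destruct Hp as [q [<- Hq]]. destruct (IH q Hq) as [l1 [l2 [E1 E2]]].
    exists (b :: l1), l2; subst; auto. Qed.

Lemma NoDup_insert_all a t : ~ In a t -> NoDup (insert_all a t).
Proof. induction t as [|b t IH]; simpl; intro H.
  - constructor; auto. constructor.
  - constructor.
    + intro Hin. apply in_map_iff in Hin. destruct Hin as [q [E _]]. injection E; intros; subst. tauto.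
    + apply FinFun.Injective_map_NoDup. intros u v E; injection E; auto. apply IH; tauto. Qed.

Lemma NoDup_flat_map {A B} (f : A -> list B) L : NoDup L -> (forall a, In a L -> NoDup (f a)) ->
  (forall a b p, In a L -> In b L -> a <> b -> In p (f a) -> In p (f b) -> False) -> NoDup (flat_map f L).
Proof. induction 1 as [|a L Ha ND IH]; simpl; intros H1 H2. constructor.
  apply NoDup_app; auto. apply IH; auto. intros; eapply H2; eauto.
  intros p Hp Hp'. apply in_flat_map in Hp'. destruct Hp' as [b [Hb Hp']].
  apply (H2 a b p); auto. intro; subst; auto. Qed.

Lemma remove_split a l1 l2 : ~ In a l1 -> ~ In a l2 -> remove Nat.eq_dec a (l1 ++ a :: l2) = l1 ++ l2.
Proof. intros H1 H2. rewrite remove_app. simpl. destruct (Nat.eq_dec a a); [|congruence].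
  rewrite !notin_remove; auto. Qed.

Lemma NoDup_perms l : NoDup l -> NoDup (perms l).
Proof. induction 1 as [|a t Ha ND IH]; simpl. constructor; auto; constructor.
  apply NoDup_flat_map; auto.
  - intros q Hq. apply NoDup_insert_all. intro Hin. apply Ha. apply perms_perm in Hq.
    eapply Permutation_in; eauto.
  - intros q1 q2 p Hq1 Hq2 Hne Hp1 Hp2. apply Hne.
    apply perms_perm in Hq1. apply perms_perm in Hq2.
    destruct (insert_all_split _ _ _ Hp1) as [l1 [l2 [E1 E2]]].
    destruct (insert_all_split _ _ _ Hp2) as [m1 [m2 [E3 E4]]].
    assert (N1 : ~ In a q1) by (intro Hin; apply Ha; exact (Permutation_in _ Hq1 Hin)).
    assert (N2 : ~ In a q2) by (intro Hin; apply Ha; exact (Permutation_in _ Hq2 Hin)).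
    subst q1 q2. rewrite <- (remove_split a l1 l2), <- (remove_split a m1 m2), <- E1, <- E3; auto;
    intro; first [apply N1; apply in_or_app; now auto | apply N2; apply in_or_app; now auto]. Qed.
Lemma Pi_perm d p : In p (Pi d) <-> Permutation p (seq 0 (S d)).
Proof. split; [apply perms_perm|apply perm_perms]. Qed.
Lemma Pi_len d p : In p (Pi d) -> length p = S d.
Proof. intro H. apply Pi_perm, Permutation_length in H. rewrite H, length_seq; auto. Qed.
Lemma Pi_in d p k : In p (Pi d) -> (In k p <-> (k <= d)%nat).
Proof. intro H. apply Pi_perm in H. split; intro Hk.
  - apply (Permutation_in _ H), in_seq in Hk. lia.
  - apply (Permutation_in _ (Permutation_sym H)), in_seq. lia. Qed.
Lemma Pi_NoDup d : NoDup (Pi d).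
Proof. apply NoDup_perms, seq_NoDup. Qed.
Lemma Pi_nth d p l : In p (Pi d) -> (l <= d)%nat -> (nth l p 0%nat <= d)%nat.
Proof. intros H Hl. apply (Pi_in d p); auto. apply nth_In. rewrite (Pi_len d p H). lia. Qed.

Lemma Sorted_nth {A} (Rl : A -> A -> Prop) l a0 : Sorted Rl l -> forall k, (S k < length l)%nat -> Rl (nth k l a0) (nth (S k) l a0).
Proof. induction 1 as [|a t Hs IH Hd]; simpl; intros k Hk. lia.
  destruct k. destruct t as [|b t]. simpl in Hk; lia. inversion Hd; auto.
  apply IH; lia. Qed.
Lemma nth_Sorted {A} (Rl : A -> A -> Prop) l a0 : (forall k, (S k < length l)%nat -> Rl (nth k l a0) (nth (S k) l a0)) -> Sorted Rl l.
Proof. induction l as [|a t IH]; intro H. constructor.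
  constructor. apply IH. intros k Hk. apply (H (S k)); simpl; lia.
  destruct t as [|b t]; constructor. apply (H O); simpl; lia. Qed.

Lemma hp_sorted d x p : length p = S d -> (has_pattern d x p <-> Sorted (relx x) p).
Proof. intro Hl. rewrite hp_iff. split.
  - intro H. apply (nth_Sorted _ _ 0%nat). intros k Hk. specialize (H (S k) ltac:(lia)).
    replace (S k - 1)%nat with k in H by lia. auto.
  - intros H l Hl'. replace l with (S (l - 1)) at 2 by lia. apply Sorted_nth; auto. lia. Qed.

Lemma relx_tr x : Relations_1.Transitive (relx x).
Proof. intros i j k; apply relx_trans. Qed.

Lemma sort_insert x a l : Sorted (relx x) l -> ~ In a l -> exists l', Permutation l' (a :: l) /\ Sorted (relx x) l'.
Proof. induction l as [|b t IH]; intros Hs Ha.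
  - exists [a]; split; auto.
  - destruct (classic (relx x a b)) as [H|H].
    + exists (a :: b :: t); split; auto.
    + assert (Hba : relx x b a). { destruct (relx_total x a b) as [E|E]; auto. intro; subst; simpl in Ha; tauto. tauto. }
      apply Sorted_inv in Hs. destruct Hs as [Hs Hd].
      destruct (IH Hs ltac:(simpl in Ha; tauto)) as [l'' [Hp Hs'']].
      exists (b :: l''); split.
      * eapply perm_trans. apply perm_skip; exact Hp. apply perm_swap.
      * constructor; auto. destruct l'' as [|c l'']; constructor.
        assert (Hc : In c (a :: t)) by (apply (Permutation_in _ Hp); simpl; auto).
        destruct Hc as [<-|Hc]; auto.
        assert (StronglySorted (relx x) (b :: t)) as HS by (apply Sorted_StronglySorted; [apply relx_tr| constructor; auto]).
        apply StronglySorted_inv in HS. destruct HS as [_ HF]. rewrite Forall_forall in HF; auto. Qed.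

Lemma sort_exists x n : exists l, Permutation l (seq 0 n) /\ Sorted (relx x) l.
Proof. induction n as [|n IH]. exists []; split; auto.
  destruct IH as [l [Hp Hs]]. destruct (sort_insert x n l Hs) as [l' [Hp' Hs']].
  - intro Hin. apply (Permutation_in _ Hp), in_seq in Hin. lia.
  - exists l'; split; auto. rewrite seq_S. eapply perm_trans. exact Hp'. simpl.
    eapply perm_trans. apply Permutation_cons_append. apply Permutation_app_tail; auto. Qed.

Lemma pattern_exists d x : exists p, In p (Pi d) /\ has_pattern d x p.
Proof. destruct (sort_exists x (S d)) as [l [Hp Hs]]. exists l.
  assert (In l (Pi d)) by (apply Pi_perm; auto). split; auto.
  apply hp_sorted; auto. apply Pi_len; auto. Qed.

Lemma ss_unique x l l' : StronglySorted (relx x) l -> StronglySorted (relx x) l' -> Permutation l l' -> l = l'.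
Proof. revert l'; induction l as [|a t IH]; intros l' H1 H2 Hp.
  - apply Permutation_nil in Hp; auto.
  - destruct l' as [|b t']. apply Permutation_sym, Permutation_nil in Hp; discriminate.
    apply StronglySorted_inv in H1; destruct H1 as [H1 F1]. apply StronglySorted_inv in H2; destruct H2 as [H2 F2].
    rewrite Forall_forall in F1, F2.
    destruct (Nat.eq_dec a b) as [E|E].
    + subst. f_equal. apply IH; auto. eapply Permutation_cons_inv; eauto.
    + exfalso. assert (Ha : In a t'). { assert (In a (b :: t')) by (apply (Permutation_in _ Hp); simpl; auto).
        destruct H as [H|H]; auto. congruence. }
      assert (Hb : In b t). { assert (In b (a :: t)) by (apply (Permutation_in _ (Permutation_sym Hp)); simpl; auto).
        destruct H as [H|H]; auto. congruence. }
      apply (relx_asym x a b); auto. Qed.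

Lemma pattern_unique d x p p' : In p (Pi d) -> In p' (Pi d) -> has_pattern d x p -> has_pattern d x p' -> p = p'.
Proof. intros Hp Hp' H H'. apply hp_sorted in H; [|apply Pi_len; auto]. apply hp_sorted in H'; [|apply Pi_len; auto].
  apply (ss_unique x). apply Sorted_StronglySorted; auto; apply relx_tr. apply Sorted_StronglySorted; auto; apply relx_tr.
  apply Pi_perm in Hp. apply Pi_perm in Hp'. eapply perm_trans; eauto. apply Permutation_sym; auto. Qed.

Lemma ss_transfer x y l : StronglySorted (relx x) l -> StronglySorted (relx y) l ->
  forall i j, In i l -> In j l -> relx x i j -> relx y i j.
Proof. induction l as [|a t IH]; intros H1 H2 i j Hi Hj Hr. destruct Hi.
  apply StronglySorted_inv in H1; destruct H1 as [H1 F1]. apply StronglySorted_inv in H2; destruct H2 as [H2 F2].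
  rewrite Forall_forall in F1, F2.
  destruct (Nat.eq_dec i a) as [E|E].
  - subst. destruct Hj as [Hj|Hj]. subst; exfalso; eapply relx_irr; eauto. auto.
  - destruct Hi as [Hi|Hi]. congruence.
    destruct Hj as [Hj|Hj]. subst. exfalso. apply (relx_asym x i j); auto. auto. Qed.

Lemma pattern_rel d x y p : In p (Pi d) -> has_pattern d x p -> has_pattern d y p ->
  forall i j, (i <= d)%nat -> (j <= d)%nat -> relx x i j -> relx y i j.
Proof. intros Hp Hx Hy i j Hi Hj.
  apply hp_sorted in Hx; [|apply Pi_len; auto]. apply hp_sorted in Hy; [|apply Pi_len; auto].
  apply ss_transfer with p. apply Sorted_StronglySorted; auto; apply relx_tr. apply Sorted_StronglySorted; auto; apply relx_tr.
  apply (Pi_in d); auto. apply (Pi_in d); auto. Qed.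

Lemma pattern_transfer d x y p : In p (Pi d) ->
  (forall i j, (i <= d)%nat -> (j <= d)%nat -> relx x i j -> relx y i j) -> has_pattern d x p -> has_pattern d y p.
Proof. intros Hp H Hx. rewrite hp_iff in *. intros l Hl. apply H; auto; apply Pi_nth; auto; lia. Qed.
Definition Xv {I} (T : Omega I -> Omega I) (n : nat) (w : Omega I) : nat -> R :=
  fun k => proj1_sig (iterT (n - k) T w).

Definition betw (X : nat -> R) (d i : nat) : Prop :=
  (relx X 0 i /\ relx X i (S d)) \/ (relx X (S d) i /\ relx X i 0).

Definition Ud {I} (T : Omega I -> Omega I) (d : nat) (w : Omega I) : Prop :=
  forall i, (1 <= i <= d)%nat -> ~ betw (Xv T (S d) w) d i.

Definition Qc {I} (T : Omega I -> Omega I) (d : nat) (ab : list nat * list nat) (w : Omega I) : Prop :=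
  P_pat (@proj1_sig R I) T d (fst ab) w /\ P_pat (@proj1_sig R I) T d (snd ab) (T w).

Definition Aset {I} (T : Omega I -> Omega I) (d : nat) (w : Omega I) : Prop := relx (Xv T (S d) w) 0 (S d).

Lemma hp_ext d x y p : In p (Pi d) -> (forall k, (k <= d)%nat -> x k = y k) -> has_pattern d x p -> has_pattern d y p.
Proof. intros Hp E. apply pattern_transfer; auto. intros i j Hi Hj. unfold relx. rewrite !E; auto. Qed.

Lemma Q2_iff {I} (T : Omega I -> Omega I) d b w : In b (Pi d) ->
  (P_pat (@proj1_sig R I) T d b (T w) <-> has_pattern d (Xv T (S d) w) b).
Proof. intro Hb. unfold P_pat. split; apply hp_ext; auto; intros k Hk; unfold Xv;
  rewrite iterT_shift; replace (S d - k)%nat with (S (d - k)) by lia; auto. Qed.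

Lemma Q1_iff {I} (T : Omega I -> Omega I) d a w :
  (P_pat (@proj1_sig R I) T d a w <-> has_pattern d (fun k => Xv T (S d) w (S k)) a).
Proof. reflexivity. Qed.

Lemma relx_shift x i j : relx (fun k => x (S k)) i j <-> relx x (S i) (S j).
Proof. unfold relx. split; (intros [H|[H1 H2]]; [left; auto|right; split; auto; lia]). Qed.

Lemma Q_pref {I} (T : Omega I -> Omega I) d ab w w' : In (snd ab) (Pi d) -> Qc T d ab w -> Qc T d ab w' ->
  forall i j, (i <= d)%nat -> (j <= d)%nat -> relx (Xv T (S d) w) i j -> relx (Xv T (S d) w') i j.
Proof. intros Hb [_ H1] [_ H2]. apply Q2_iff in H1; auto. apply Q2_iff in H2; auto.
  apply (pattern_rel d (Xv T (S d) w) (Xv T (S d) w') (snd ab)); auto. Qed.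

Lemma Q_suf {I} (T : Omega I -> Omega I) d ab w w' : In (fst ab) (Pi d) -> Qc T d ab w -> Qc T d ab w' ->
  forall i j, (1 <= i <= S d)%nat -> (1 <= j <= S d)%nat -> relx (Xv T (S d) w) i j -> relx (Xv T (S d) w') i j.
Proof. intros Ha [H1 _] [H2 _] i j Hi Hj Hr. apply Q1_iff in H1. apply Q1_iff in H2.
  destruct i as [|i]; [lia|]. destruct j as [|j]; [lia|].
  apply relx_shift. apply relx_shift in Hr.
  apply (pattern_rel d (fun k => Xv T (S d) w (S k)) (fun k => Xv T (S d) w' (S k)) (fst ab)); auto; lia. Qed.

Lemma cellP_in_Q {I} (T : Omega I -> Omega I) d p ab w w' : In p (Pi (S d)) -> In (fst ab) (Pi d) -> In (snd ab) (Pi d) ->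
  P_pat (@proj1_sig R I) T (S d) p w -> P_pat (@proj1_sig R I) T (S d) p w' -> Qc T d ab w -> Qc T d ab w'.
Proof. intros Hp Ha Hb H1 H2 [Q1 Q2]. change (has_pattern (S d) (Xv T (S d) w) p) in H1. change (has_pattern (S d) (Xv T (S d) w') p) in H2.
  pose proof (pattern_rel _ _ _ _ Hp H1 H2) as HR. split.
  - apply Q1_iff. apply Q1_iff in Q1.
    apply (pattern_transfer d (fun k => Xv T (S d) w (S k)) (fun k => Xv T (S d) w' (S k)) _ Ha). 2: exact Q1.
    intros i j Hi Hj Hr. apply relx_shift. apply relx_shift in Hr. apply HR; try lia; auto.
  - apply Q2_iff; auto. apply Q2_iff in Q2; auto. apply (pattern_transfer d (Xv T (S d) w) (Xv T (S d) w') _ Hb). 2: exact Q2.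
    intros i j Hi Hj Hr. apply HR; auto; lia. Qed.

Lemma cellQA_in_P {I} (T : Omega I -> Omega I) d p ab w w' : In p (Pi (S d)) -> In (fst ab) (Pi d) -> In (snd ab) (Pi d) ->
  Qc T d ab w -> Qc T d ab w' -> (Aset T d w <-> Aset T d w') ->
  P_pat (@proj1_sig R I) T (S d) p w -> P_pat (@proj1_sig R I) T (S d) p w'.
Proof. intros Hp Ha Hb Q1 Q2 HA H. change (has_pattern (S d) (Xv T (S d) w) p) in H. change (has_pattern (S d) (Xv T (S d) w') p).
  apply (pattern_transfer _ (Xv T (S d) w) (Xv T (S d) w') _ Hp); auto. intros i j Hi Hj Hr.
  destruct (le_lt_dec i d) as [Hi'|Hi']; destruct (le_lt_dec j d) as [Hj'|Hj'].
  - apply (Q_pref T d ab w w'); auto.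
  - destruct i as [|i].
    + assert (j = S d) by lia. subst. apply HA; auto.
    + apply (Q_suf T d ab w w'); auto; lia.
  - destruct j as [|j].
    + assert (i = S d) by lia. subst.
      destruct (relx_total (Xv T (S d) w') (S d) 0) as [E|E]; auto.
      exfalso. apply HA in E. apply (relx_asym _ _ _ Hr E).
    + apply (Q_suf T d ab w w'); auto; lia.
  - exfalso. assert (i = j) by lia. subst. apply (relx_irr _ _ Hr). Qed.

Lemma amb_in_U {I} (T : Omega I -> Omega I) d ab w1 w2 w : In (fst ab) (Pi d) -> In (snd ab) (Pi d) ->
  Qc T d ab w1 -> Qc T d ab w2 -> Aset T d w1 -> ~ Aset T d w2 -> Qc T d ab w -> Ud T d w.
Proof. intros Ha Hb Q1 Q2 A1 A2 Q i Hi [[H1 H2]|[H1 H2]].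
  - apply A2. unfold Aset. apply relx_trans with i.
    eapply (Q_pref T d ab w w2); eauto; lia. eapply (Q_suf T d ab w w2); eauto; lia.
  - apply (relx_asym _ _ _ A1). apply relx_trans with i.
    eapply (Q_suf T d ab w w1); eauto; lia. eapply (Q_pref T d ab w w1); eauto; lia. Qed.

Lemma meas_Xv {I} (T : Omega I -> Omega I) n k : measurable_map (Borel I) T -> meas (Borel I) (fun w => Xv T n w k).
Proof. intro HT. unfold Xv. apply (meas_iter (Borel I) T (n - k) HT (@proj1_sig R I)). apply meas_val. Qed.

Lemma sa_relx {X} F (Xf : X -> nat -> R) i j : is_sigma_algebra F -> (forall k, meas F (fun w => Xf w k)) ->
  F (fun w => relx (Xf w) i j).
Proof. intros HF Hm. unfold relx. apply sa_or; auto.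
  apply (meas_lt2 F (fun w => Xf w j) (fun w => Xf w i)); auto.
  apply sa_and; auto. apply (meas_eq2 F (fun w => Xf w i) (fun w => Xf w j)); auto. apply sa_const; auto. Qed.

Lemma sa_hp {X} F (Xf : X -> nat -> R) d p : is_sigma_algebra F -> (forall k, meas F (fun w => Xf w k)) ->
  F (fun w => has_pattern d (Xf w) p).
Proof. intros HF Hm. apply (sa_ext F (fun w => forall l, (1 <= l <= d)%nat -> relx (Xf w) (nth (l - 1) p 0%nat) (nth l p 0%nat))).
  apply (sa_forall_g F (fun l => (1 <= l <= d)%nat) (fun l w => relx (Xf w) (nth (l - 1) p 0%nat) (nth l p 0%nat))); auto.
  intro l; apply sa_relx; auto. intro w; rewrite hp_iff; tauto. Qed.

Lemma borel_P {I} (T : Omega I -> Omega I) n p : measurable_map (Borel I) T -> Borel I (P_pat (@proj1_sig R I) T n p).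
Proof. intro HT. apply (sa_hp (Borel I) (fun w => Xv T n w)). apply borel_sa. intro k; apply meas_Xv; auto. Qed.

Lemma borel_Q {I} (T : Omega I -> Omega I) d ab : measurable_map (Borel I) T -> Borel I (Qc T d ab).
Proof. intro HT. unfold Qc. apply sa_and. apply borel_sa. apply borel_P; auto.
  apply (HT (P_pat (@proj1_sig R I) T d (snd ab))). apply borel_P; auto. Qed.

Lemma borel_A {I} (T : Omega I -> Omega I) d : measurable_map (Borel I) T -> Borel I (Aset T d).
Proof. intro HT. apply (sa_relx (Borel I) (fun w => Xv T (S d) w)). apply borel_sa. intro k; apply meas_Xv; auto. Qed.

Lemma borel_U {I} (T : Omega I -> Omega I) d : measurable_map (Borel I) T -> Borel I (Ud T d).
Proof. intro HT. pose proof (borel_sa I) as HF. unfold Ud.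
  apply (sa_forall_g (Borel I) (fun i => (1 <= i <= d)%nat) (fun i w => ~ betw (Xv T (S d) w) d i)); auto.
  intro i. apply sa_C; auto. unfold betw. apply sa_or; auto; apply sa_and; auto;
  apply (sa_relx (Borel I) (fun w => Xv T (S d) w)); auto; intro k; apply meas_Xv; auto. Qed.
Lemma eta0 : eta 0 = 0.
Proof. unfold eta. destruct (Req_EM_T 0 0); auto; congruence. Qed.
Lemma eta_pos x : 0 < x -> eta x = - x * ln x.
Proof. intro H. unfold eta. destruct (Req_EM_T x 0); auto. lra. Qed.

Lemma ln_le_minus1 z : 0 < z -> ln z <= z - 1.
Proof. intro H. pose proof (exp_ineq1_le (ln z)). rewrite exp_ln in H0; auto. lra. Qed.

Lemma eta_subadd x y : 0 <= x -> 0 <= y -> eta (x + y) <= eta x + eta y.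
Proof. intros Hx Hy. destruct (Req_dec x 0) as [E|E].
  subst. rewrite eta0, Rplus_0_l; lra.
  destruct (Req_dec y 0) as [E'|E']. subst. rewrite eta0, Rplus_0_r; lra.
  rewrite !eta_pos by lra.
  assert (ln x <= ln (x + y)). { apply Rlt_le, ln_increasing; lra. }
  assert (ln y <= ln (x + y)). { apply Rlt_le, ln_increasing; lra. }
  nra. Qed.

Lemma eta_phi x y : 0 <= x -> 0 <= y -> eta x + eta y - eta (x + y) <= (x + y) * ln 2.
Proof. intros Hx Hy. pose proof ln_lt_2 as L2.
  destruct (Req_dec x 0) as [E|E].
  subst. rewrite eta0. replace (0 + y) with y by ring. assert (0 <= y * ln 2) by nra. lra.
  destruct (Req_dec y 0) as [E'|E']. subst. rewrite eta0. replace (x + 0) with x by ring. assert (0 <= x * ln 2) by nra. lra.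
  rewrite !eta_pos by lra.
  assert (A1 : ln ((x + y) / (2 * x)) <= (x + y) / (2 * x) - 1) by (apply ln_le_minus1; apply Rdiv_lt_0_compat; lra).
  assert (A2 : ln ((x + y) / (2 * y)) <= (x + y) / (2 * y) - 1) by (apply ln_le_minus1; apply Rdiv_lt_0_compat; lra).
  unfold Rdiv in A1, A2. rewrite ln_mult, ln_Rinv, ln_mult in A1, A2 by (try apply Rinv_0_lt_compat; lra).
  assert (x * ((x + y) * / (2 * x) - 1) = (x + y) / 2 - x) by (field; lra).
  assert (y * ((x + y) * / (2 * y) - 1) = (x + y) / 2 - y) by (field; lra).
  assert (x * (ln (x + y) + - (ln 2 + ln x)) <= x * ((x + y) * / (2 * x) - 1)) by (apply Rmult_le_compat_l; lra).
  assert (y * (ln (x + y) + - (ln 2 + ln y)) <= y * ((x + y) * / (2 * y) - 1)) by (apply Rmult_le_compat_l; lra).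
  nra. Qed.

Lemma eta_sum {A} (f : A -> R) L : (forall i, In i L -> 0 <= f i) ->
  eta (Rsum_list (map f L)) <= Rsum_list (map (fun i => eta (f i)) L).
Proof. induction L as [|a L IH]; intro H. simpl. unfold Rsum_list; simpl. rewrite eta0; lra.
  cbn [map]. rewrite !Rsum_cons. eapply Rle_trans. apply eta_subadd.
  apply H; simpl; auto. apply Rsum_nonneg; intros; apply H; simpl; auto.
  assert (eta (Rsum_list (map f L)) <= Rsum_list (map (fun i => eta (f i)) L)) by (apply IH; intros; apply H; simpl; auto).
  lra. Qed.

Lemma NoDup_prod {A B} (l : list A) (l' : list B) : NoDup l -> NoDup l' -> NoDup (list_prod l l').
Proof. induction 1 as [|a l Ha ND IH]; intro H'; simpl. constructor.
  apply NoDup_app. apply FinFun.Injective_map_NoDup; auto. intros u v E; injection E; auto.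
  auto. intros [x y] Hxy Hxy'. apply in_map_iff in Hxy. destruct Hxy as [b [E _]]. injection E; intros; subst.
  apply in_prod_iff in Hxy'. tauto. Qed.

Lemma Rsum_app l1 l2 : Rsum_list (l1 ++ l2) = Rsum_list l1 + Rsum_list l2.
Proof. unfold Rsum_list. induction l1; simpl. ring. rewrite IHl1. ring. Qed.

Lemma Rsum_flat_prod {A B} (f : A -> B -> R) (L : list A) (L' : list B) :
  Rsum_list (flat_map (fun a => map (fun b => f a b) L') L) = Rsum_list (map (fun ab => f (fst ab) (snd ab)) (list_prod L L')).
Proof. induction L as [|a L IH]; simpl. reflexivity.
  rewrite map_app, !Rsum_app, IH, map_map. reflexivity. Qed.
Lemma P_disj {I} (T : Omega I -> Omega I) n p p' w : In p (Pi n) -> In p' (Pi n) -> p <> p' ->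
  P_pat (@proj1_sig R I) T n p w -> P_pat (@proj1_sig R I) T n p' w -> False.
Proof. intros H1 H2 Hne A B. apply Hne. apply (pattern_unique n (Xv T n w)); auto. Qed.

Lemma P_cover {I} (T : Omega I -> Omega I) n w : exists p, In p (Pi n) /\ P_pat (@proj1_sig R I) T n p w.
Proof. apply (pattern_exists n (Xv T n w)). Qed.

Definition L2 d := list_prod (Pi d) (Pi d).

Lemma L2_in d ab : In ab (L2 d) -> In (fst ab) (Pi d) /\ In (snd ab) (Pi d).
Proof. destruct ab; unfold L2; rewrite in_prod_iff; auto. Qed.

Lemma Q_disj {I} (T : Omega I -> Omega I) d ab ab' w : In ab (L2 d) -> In ab' (L2 d) -> ab <> ab' ->
  Qc T d ab w -> Qc T d ab' w -> False.
Proof. intros H1 H2 Hne [A1 A2] [B1 B2]. apply L2_in in H1. apply L2_in in H2. apply Hne.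
  destruct ab as [a b], ab' as [a' b']; simpl in *.
  assert (a = a'). { destruct (list_eq_dec Nat.eq_dec a a') as [E|E]; auto. exfalso; eapply (P_disj T d a a'); eauto; tauto. }
  assert (b = b'). { destruct (list_eq_dec Nat.eq_dec b b') as [E|E]; auto. exfalso; eapply (P_disj T d b b'); eauto; tauto. }
  subst; auto. Qed.

Lemma Q_cover {I} (T : Omega I -> Omega I) d w : exists ab, In ab (L2 d) /\ Qc T d ab w.
Proof. destruct (P_cover T d w) as [a [Ha A]]. destruct (P_cover T d (T w)) as [b [Hb B]].
  exists (a, b); split. unfold L2; apply in_prod; auto. split; auto. Qed.

Lemma H2_eq {I} (mu : (Omega I -> Prop) -> R) (T : Omega I -> Omega I) d :
  H_ord2 mu (@proj1_sig R I) T d = Rsum_list (map (fun ab => eta (mu (Qc T d ab))) (L2 d)).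
Proof. unfold H_ord2, L2. rewrite (Rsum_flat_prod (fun a b => eta (mu (fun w => P_pat (@proj1_sig R I) T d a w /\ P_pat (@proj1_sig R I) T d b (T w))))).
  reflexivity. Qed.

Lemma entropy_bound {I} (mu : (Omega I -> Prop) -> R) (T : Omega I -> Omega I) d :
  is_prob_measure (Borel I) mu -> measurable_map (Borel I) T ->
  0 <= H_ord mu (@proj1_sig R I) T (S d) - H_ord2 mu (@proj1_sig R I) T d <= ln 2 * mu (Ud T d).
Proof. intros Hm HT. pose proof (borel_sa I) as HF. set (F := Borel I) in *.
  set (P := fun p => P_pat (@proj1_sig R I) T (S d) p).
  assert (HP : forall p, F (P p)) by (intro; apply borel_P; auto).
  assert (HQ : forall ab, F (Qc T d ab)) by (intro; apply borel_Q; auto).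
  assert (HA : F (Aset T d)) by (apply borel_A; auto).
  assert (NDP : NoDup (Pi (S d))) by apply Pi_NoDup.
  assert (NDQ : NoDup (L2 d)) by (apply NoDup_prod; apply Pi_NoDup).
  assert (DP : forall i j x, In i (Pi (S d)) -> In j (Pi (S d)) -> i <> j -> P i x -> P j x -> False)
    by (intros i j x Hi Hj Hij Hx1 Hx2; exact (P_disj T (S d) i j x Hi Hj Hij Hx1 Hx2)).
  assert (DQ : forall i j x, In i (L2 d) -> In j (L2 d) -> i <> j -> Qc T d i x -> Qc T d j x -> False)
    by (intros i j x Hi Hj Hij Hx1 Hx2; exact (Q_disj T d i j x Hi Hj Hij Hx1 Hx2)).
  assert (CP : forall (E : Omega I -> Prop) x, E x -> exists i, In i (Pi (S d)) /\ P i x) by (intros; apply P_cover).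
  assert (CQ : forall (E : Omega I -> Prop) x, E x -> exists i, In i (L2 d) /\ Qc T d i x) by (intros; apply Q_cover).
  assert (S1 : H_ord mu (@proj1_sig R I) T (S d) =
     Rsum_list (map (fun ab => Rsum_list (map (fun p => eta (mu (fun w => Qc T d ab w /\ P p w))) (Pi (S d)))) (L2 d))).
  { unfold H_ord. rewrite <- (Rsum_swap (fun p ab => eta (mu (fun w => Qc T d ab w /\ P p w)))).
    apply Rsum_ext. intros p Hp. symmetry. apply (ns_sum F mu (L2 d) (Qc T d) eta HF Hm NDQ DQ).
    apply (CQ (P p)). intros x y ab Hab Hx Hy Hq. apply L2_in in Hab.
    apply (cellP_in_Q T d p ab x y); tauto. apply eta0. }
  rewrite S1, H2_eq, <- Rsum_minus.
  assert (PS : forall E, F E -> Rsum_list (map (fun p => mu (fun w => P p w /\ E w)) (Pi (S d))) = mu E).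
  { intros E HE. apply (part_sum F mu (Pi (S d)) P HF Hm NDP); auto. intros x Hx; apply (CP E); auto. }
  split.
  - apply Rsum_nonneg. intros ab Hab.
    rewrite <- (PS (Qc T d ab)); auto.
    rewrite (Rsum_ext (fun p => eta (mu (fun w => Qc T d ab w /\ P p w))) (fun p => eta (mu (fun w => P p w /\ Qc T d ab w)))).
    2:{ intros; f_equal; apply mu_ext; intro; tauto. }
    pose proof (eta_sum (fun p => mu (fun w => P p w /\ Qc T d ab w)) (Pi (S d))) as Hs.
    assert (Hnn : forall i, In i (Pi (S d)) -> 0 <= mu (fun w => P i w /\ Qc T d ab w)).
    { intros; apply (mu_ge0 F); auto; apply sa_and; auto. }
    specialize (Hs Hnn). lra.
  - rewrite <- (part_sum F mu (L2 d) (Qc T d) HF Hm NDQ ltac:(auto) DQ (Ud T d) ltac:(apply borel_U; auto) (CQ _)).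
    rewrite <- Rsum_scal. apply Rsum_le. intros ab Hab. pose proof (L2_in d ab Hab) as [Ha Hb].
    set (Q := Qc T d ab).
    set (al := mu (fun w => Q w /\ Aset T d w)). set (be := mu (fun w => Q w /\ ~ Aset T d w)).
    assert (HQ' : F Q) by apply HQ.
    assert (Hal : 0 <= al) by (apply (mu_ge0 F); auto; apply sa_and; auto).
    assert (Hbe : 0 <= be) by (apply (mu_ge0 F); auto; apply sa_and; auto; apply sa_C; auto).
    assert (EQ : mu Q = al + be) by (apply (mu_split F); auto).
    assert (B1 : Rsum_list (map (fun p => eta (mu (fun w => Q w /\ P p w))) (Pi (S d))) <= eta al + eta be).
    { assert (EA : Rsum_list (map (fun p => eta (mu (fun w => P p w /\ (Q w /\ Aset T d w)))) (Pi (S d))) = eta al).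
      { apply (ns_sum F mu (Pi (S d)) P eta HF Hm NDP DP). intros; apply CP with (E := fun _ => True); auto.
        intros x y p Hp [Hx1 Hx2] [Hy1 Hy2] Hpx. apply (cellQA_in_P T d p ab x y); tauto. apply eta0. }
      assert (EB : Rsum_list (map (fun p => eta (mu (fun w => P p w /\ (Q w /\ ~ Aset T d w)))) (Pi (S d))) = eta be).
      { apply (ns_sum F mu (Pi (S d)) P eta HF Hm NDP DP). intros; apply CP with (E := fun _ => True); auto.
        intros x y p Hp [Hx1 Hx2] [Hy1 Hy2] Hpx. apply (cellQA_in_P T d p ab x y); tauto. apply eta0. }
      rewrite <- EA, <- EB, <- Rsum_plus. apply Rsum_le. intros p Hp.
      rewrite (mu_split F mu (fun w => Q w /\ P p w) (Aset T d)); auto. 2: apply sa_and; auto.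
      rewrite (mu_ext mu (fun w => (Q w /\ P p w) /\ Aset T d w) (fun w => P p w /\ (Q w /\ Aset T d w))) by (intro; tauto).
      rewrite (mu_ext mu (fun w => (Q w /\ P p w) /\ ~ Aset T d w) (fun w => P p w /\ (Q w /\ ~ Aset T d w))) by (intro; tauto).
      apply eta_subadd; apply (mu_ge0 F); auto; repeat apply sa_and; auto; apply sa_C; auto. }
    rewrite EQ. pose proof (eta_phi al be Hal Hbe) as Hphi. pose proof ln_lt_2.
    destruct (Req_dec al 0) as [E0|E0].
    { rewrite E0 in *. rewrite eta0 in B1. replace (0 + be) with be by ring.
      assert (0 <= mu (fun w => Q w /\ Ud T d w)) by (apply (mu_ge0 F); auto; apply sa_and; auto; apply borel_U; auto).
      nra. }
    destruct (Req_dec be 0) as [E1|E1].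
    { rewrite E1 in *. rewrite eta0 in B1. replace (al + 0) with al by ring.
      assert (0 <= mu (fun w => Q w /\ Ud T d w)) by (apply (mu_ge0 F); auto; apply sa_and; auto; apply borel_U; auto).
      nra. }
    assert (Pal : 0 < al) by lra. assert (Pbe : 0 < be) by lra.
    destruct (mu_pos_inh F mu (fun w => Q w /\ Aset T d w) HF Hm Pal) as [w1 [Q1 A1]].
    destruct (mu_pos_inh F mu (fun w => Q w /\ ~ Aset T d w) HF Hm Pbe) as [w2 [Q2 A2]].
    assert (EU : mu (fun w => Q w /\ Ud T d w) = mu Q).
    { apply mu_ext. intro w; split; [tauto|]. intro Hw; split; auto. apply (amb_in_U T d ab w1 w2 w); auto. }
    rewrite EU, EQ. nra.
Qed.
Lemma nat_big r : exists n, r < INR n.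
Proof. destruct (INR_archimed 1 r ltac:(lra)) as [n Hn]. exists n; lra. Qed.

Lemma sa_iter {X} F (T : X -> X) J n : measurable_map F T -> F J -> F (fun w => J (iterT n T w)).
Proof. intros HT HJ. revert J HJ. induction n; intros J HJ; simpl; auto.
  apply (IHn (fun x => J (T x))). apply (HT J HJ). Qed.

Lemma Un_cv_eventually0 s N : (forall n, (n >= N)%nat -> s n = 0) -> Un_cv s 0.
Proof. intros H eps He. exists N. intros n Hn. rewrite H; auto. unfold Rdist. rewrite Rminus_0_r, Rabs_R0; lra. Qed.

Definition Av {X} (T : X -> X) (J : X -> Prop) (d : nat) (w : X) : Prop :=
  forall j, (1 <= j <= d)%nat -> ~ J (iterT j T w).

Lemma sa_Av {X} F (T : X -> X) J d : is_sigma_algebra F -> measurable_map F T -> F J -> F (Av T J d).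
Proof. intros HF HT HJ. unfold Av.
  apply (sa_forall_g F (fun j => (1 <= j <= d)%nat) (fun j w => ~ J (iterT j T w))); auto.
  intro j; apply sa_C; auto; apply sa_iter; auto. Qed.

Lemma avoid_to0 {X} F (mu : (X -> Prop) -> R) (T : X -> X) J : is_sigma_algebra F -> is_prob_measure F mu ->
  measurable_map F T -> strong_mixing F mu T -> F J -> 0 < mu J -> Un_cv (fun d => mu (Av T J d)) 0.
Proof. intros HF Hm HT Hmix HJ Hpos.
  pose proof (mu_cont_above F mu (Av T J) HF Hm (fun d => sa_Av F T J d HF HT HJ)) as H.
  assert (Hdec : forall n x, Av T J (S n) x -> Av T J n x) by (intros n x Hx j Hj; apply Hx; lia).
  specialize (H Hdec).
  set (Ainf := fun x => forall n, Av T J n x) in *.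
  assert (HAi : F Ainf) by (apply sa_forall; auto; intro; apply sa_Av; auto).
  assert (Z : mu Ainf = 0).
  { pose proof (Hmix J Ainf HJ HAi) as Hc.
    assert (Hc0 : Un_cv (fun n => mu (fun x => J (iterT n T x) /\ Ainf x)) 0).
    { apply (Un_cv_eventually0 _ 1). intros n Hn. apply (mu_zero F); auto.
      intros x [H1 H2]. apply (H2 n n); auto; lia. }
    pose proof (UL_sequence _ _ _ Hc Hc0) as E.
    assert (0 <= mu Ainf) by (apply (mu_ge0 F); auto). nra. }
  rewrite Z in H. exact H. Qed.

Lemma val_inj {I} (w w' : Omega I) : proj1_sig w = proj1_sig w' -> w = w'.
Proof. destruct w as [x Hx], w' as [y Hy]; simpl. intro E; subst. f_equal. apply proof_irrelevance. Qed.

Lemma two_valued s l a : Un_cv s l -> (forall n, s n = 0 \/ s n = a) -> l = 0 \/ l = a.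
Proof. intros H Hs. apply NNPP; intro N.
  assert (Hp : Rmin (Rabs l) (Rabs (l - a)) > 0).
  { apply Rmin_glb_lt; apply Rabs_pos_lt; intro; apply N; [left|right]; lra. }
  destruct (H _ Hp) as [M HM]. specialize (HM M (le_n _)). unfold Rdist in HM.
  pose proof (Rmin_l (Rabs l) (Rabs (l - a))). pose proof (Rmin_r (Rabs l) (Rabs (l - a))).
  destruct (Hs M) as [E|E]; rewrite E in HM.
  - rewrite Rminus_0_l, Rabs_Ropp in HM. lra.
  - rewrite Rabs_minus_sym in HM. lra. Qed.


Lemma iter_fix {X} (T : X -> X) p n : T p = p -> iterT n T p = p.
Proof. intro E. induction n; simpl; auto. rewrite IHn; auto. Qed.

Lemma dirac_case {I} (mu : (Omega I -> Prop) -> R) (T : Omega I -> Omega I) t :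
  is_prob_measure (Borel I) mu -> measurable_map (Borel I) T -> measure_preserving (Borel I) mu T ->
  strong_mixing (Borel I) mu T -> 0 < mu (fun w => proj1_sig w = t) -> Un_cv (fun d => mu (Ud T d)) 0.
Proof. intros Hm HT Hp Hmix Hpos. pose proof (borel_sa I) as HF. set (F := Borel I) in *.
  set (A := fun w : Omega I => proj1_sig w = t) in *.
  assert (HA : F A) by (apply (meas_eq2 F (@proj1_sig R I) (fun _ => t)); auto; [apply meas_val|apply meas_const; auto]).
  destruct (mu_pos_inh F mu A HF Hm Hpos) as [p Hpt].
  assert (Asing : forall w, A w -> w = p) by (intros w Hw; apply val_inj; unfold A in *; congruence).
  set (a := mu A) in *.
  assert (Hone : a = 1).
  { pose proof (Hmix A A HA HA) as Hc.
    destruct (two_valued _ _ a Hc) as [E|E].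
    - intro n. destruct (classic (A (iterT n T p))) as [Y|Y].
      + right. apply mu_ext. intro x; split; [tauto|]. intro Hx; split; auto. rewrite (Asing x Hx); auto.
      + left. apply (mu_zero F); auto. intros x [H1 H2]. apply Y. rewrite <- (Asing x H2); auto.
    - exfalso. assert (0 < a * a) by (apply Rmult_lt_0_compat; lra). unfold a in *. lra.
    - assert (a * (a - 1) = 0) by (unfold a in *; lra). apply Rmult_integral in H. lra. }
  assert (HC : mu (fun w => ~ A w) = 0) by (rewrite (mu_compl F); auto; unfold a in Hone; lra).
  assert (Tp : T p = p).
  { apply val_inj. apply NNPP; intro N.
    assert (mu (preimage T A) <= mu (fun w => ~ A w)).
    { apply (mu_mono F mu (preimage T A) (fun w => ~ A w) HF Hm (HT A HA) (sa_C F A HF HA)).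
      intros x Hx Ax. apply (Asing x) in Ax. subst x. apply N. unfold preimage, A in *. congruence. }
    rewrite (Hp A HA) in H. fold a in H. lra. }
  apply (Un_cv_eventually0 _ 1). intros d Hd.
  apply Rle_antisym. 2: apply (mu_ge0 F); auto; apply borel_U; auto.
  rewrite <- HC. apply (mu_mono F); auto. apply borel_U; auto. apply sa_C; auto.
  intros w Hw Aw. apply (Asing w) in Aw. subst w.
  apply (Hw 1%nat). lia. right. unfold relx, Xv. rewrite !iter_fix; auto. split; right; split; auto; lia. Qed.
Definition Fd {I} (mu : (Omega I -> Prop) -> R) (t : R) : R := mu (fun w : Omega I => proj1_sig w <= t).

Lemma borel_le {I} t : Borel I (fun w : Omega I => proj1_sig w <= t).
Proof. apply (meas_le (Borel I) (@proj1_sig R I)). apply borel_sa. apply meas_val. Qed.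
Lemma borel_lt {I} t : Borel I (fun w : Omega I => proj1_sig w < t).
Proof. apply meas_val. Qed.

Lemma Fd_mono {I} (mu : (Omega I -> Prop) -> R) s t : is_prob_measure (Borel I) mu -> s <= t -> Fd mu s <= Fd mu t.
Proof. intros Hm H. unfold Fd. apply (mu_mono (Borel I)); auto. apply borel_sa. apply borel_le. apply borel_le.
  intros w Hw. set (v := proj1_sig w) in *. lra. Qed.

Lemma Fd_low {I} (mu : (Omega I -> Prop) -> R) : is_prob_measure (Borel I) mu -> forall eps, eps > 0 -> exists x, Fd mu x < eps.
Proof. intros Hm eps He. pose proof (borel_sa I) as HF.
  pose proof (mu_cont_above (Borel I) mu (fun n w => proj1_sig w <= - INR n) HF Hm (fun n => borel_le _)) as H.
  cbv beta in H. assert (Hd : forall n (x : Omega I), proj1_sig x <= - INR (S n) -> proj1_sig x <= - INR n).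
  { intros n x Hx. rewrite S_INR in Hx. set (v := proj1_sig x) in *. lra. }
  specialize (H Hd). rewrite (mu_zero (Borel I) mu) in H; auto.
  2:{ intros x Hx. destruct (nat_big (- proj1_sig x)) as [n Hn]. specialize (Hx n). set (v := proj1_sig x) in *. lra. }
  destruct (H eps He) as [N HN]. exists (- INR N). specialize (HN N (le_n _)). unfold Rdist in HN.
  apply Rabs_def2 in HN. unfold Fd. lra. Qed.

Lemma Fd_high {I} (mu : (Omega I -> Prop) -> R) : is_prob_measure (Borel I) mu -> forall eps, eps > 0 -> exists y, Fd mu y > 1 - eps.
Proof. intros Hm eps He. pose proof (borel_sa I) as HF.
  pose proof (mu_cont_below (Borel I) mu (fun n w => proj1_sig w <= INR n) HF Hm (fun n => borel_le _)) as H.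
  cbv beta in H. assert (Hd : forall n (x : Omega I), proj1_sig x <= INR n -> proj1_sig x <= INR (S n)).
  { intros n x Hx. rewrite S_INR. set (v := proj1_sig x) in *. lra. }
  specialize (H Hd). rewrite (mu_ext mu _ (fun _ => True)) in H.
  2:{ intro x; split; auto. intros _. destruct (nat_big (proj1_sig x)) as [n Hn]. exists n. lra. }
  rewrite (mu_True (Borel I) mu Hm) in H.
  destruct (H eps He) as [N HN]. exists (INR N). specialize (HN N (le_n _)). unfold Rdist in HN.
  apply Rabs_def2 in HN. unfold Fd. lra. Qed.

Lemma inv_dec n : / INR (S (S n)) <= / INR (S n).
Proof. apply Rinv_le_contravar. apply INRS_pos. rewrite (S_INR (S n)). lra. Qed.

Lemma Fd_right {I} (mu : (Omega I -> Prop) -> R) : is_prob_measure (Borel I) mu ->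
  forall t eps, eps > 0 -> exists delta, delta > 0 /\ Fd mu (t + delta) < Fd mu t + eps.
Proof. intros Hm t eps He. pose proof (borel_sa I) as HF.
  pose proof (mu_cont_above (Borel I) mu (fun n w => proj1_sig w <= t + / INR (S n)) HF Hm (fun n => borel_le _)) as H.
  cbv beta in H. assert (Hd : forall n (x : Omega I), proj1_sig x <= t + / INR (S (S n)) -> proj1_sig x <= t + / INR (S n)).
  { intros n x Hx. pose proof (inv_dec n). set (v := proj1_sig x) in *. lra. }
  specialize (H Hd). rewrite (mu_ext mu _ (fun w => proj1_sig w <= t)) in H.
  2:{ intro x; split. intro Hx. apply Rnot_lt_le. intro Hl. destruct (inv_small (proj1_sig x - t)) as [n Hn]. lra.
      specialize (Hx n). set (v := proj1_sig x) in *. lra.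
      intros Hx n. pose proof (INRS_pos n). assert (0 < / INR (S n)) by (apply Rinv_0_lt_compat; lra).
      set (v := proj1_sig x) in *. lra. }
  destruct (H eps He) as [N HN]. exists (/ INR (S N)). split. apply Rinv_0_lt_compat, INRS_pos.
  specialize (HN N (le_n _)). unfold Rdist in HN. apply Rabs_def2 in HN. unfold Fd. lra. Qed.

Lemma Fd_left {I} (mu : (Omega I -> Prop) -> R) : is_prob_measure (Borel I) mu ->
  (forall t, mu (fun w : Omega I => proj1_sig w = t) = 0) ->
  forall t eps, eps > 0 -> exists delta, delta > 0 /\ Fd mu (t - delta) > Fd mu t - eps.
Proof. intros Hm Hna t eps He. pose proof (borel_sa I) as HF.
  pose proof (mu_cont_below (Borel I) mu (fun n w => proj1_sig w <= t - / INR (S n)) HF Hm (fun n => borel_le _)) as H.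
  cbv beta in H. assert (Hd : forall n (x : Omega I), proj1_sig x <= t - / INR (S n) -> proj1_sig x <= t - / INR (S (S n))).
  { intros n x Hx. pose proof (inv_dec n). set (v := proj1_sig x) in *. lra. }
  specialize (H Hd). rewrite (mu_ext mu _ (fun w => proj1_sig w < t)) in H.
  2:{ intro x; split. intros [n Hn]. pose proof (INRS_pos n). assert (0 < / INR (S n)) by (apply Rinv_0_lt_compat; lra).
      set (v := proj1_sig x) in *. lra.
      intro Hx. destruct (inv_small (t - proj1_sig x)) as [n Hn]. lra. exists n. set (v := proj1_sig x) in *. lra. }
  assert (E : mu (fun w : Omega I => proj1_sig w < t) = Fd mu t).
  { unfold Fd. rewrite (mu_split (Borel I) mu (fun w : Omega I => proj1_sig w <= t) (fun w => proj1_sig w < t)); auto.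
    2: apply borel_le. 2: apply borel_lt.
    rewrite (mu_ext mu (fun x : Omega I => proj1_sig x <= t /\ ~ proj1_sig x < t) (fun w => proj1_sig w = t)), Hna.
    rewrite (mu_ext mu (fun x : Omega I => proj1_sig x <= t /\ proj1_sig x < t) (fun w => proj1_sig w < t)). ring.
    intro x; set (v := proj1_sig x); split; [intros [_ A]; exact A|intro A; split; [lra|exact A]].
    intro x; set (v := proj1_sig x); split; [intros [A B]; lra|intro A; split; [lra|intro; lra]]. }
  rewrite E in H. destruct (H eps He) as [N HN]. exists (/ INR (S N)). split. apply Rinv_0_lt_compat, INRS_pos.
  specialize (HN N (le_n _)). unfold Rdist in HN. apply Rabs_def2 in HN. unfold Fd in *. lra. Qed.

Lemma Fd_cont {I} (mu : (Omega I -> Prop) -> R) : is_prob_measure (Borel I) mu ->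
  (forall t, mu (fun w : Omega I => proj1_sig w = t) = 0) -> continuity (Fd mu).
Proof. intros Hm Hna t. unfold continuity_pt, continue_in, limit1_in, limit_in. simpl. unfold Rdist, D_x, no_cond.
  intros eps He. destruct (Fd_right mu Hm t eps He) as [d1 [Hd1 H1]]. destruct (Fd_left mu Hm Hna t eps He) as [d2 [Hd2 H2]].
  exists (Rmin d1 d2). split. apply Rmin_glb_lt; lra.
  intros y [_ Hy]. apply Rabs_def2 in Hy. pose proof (Rmin_l d1 d2). pose proof (Rmin_r d1 d2).
  assert (Fd mu (t - d2) <= Fd mu y) by (apply Fd_mono; auto; lra).
  assert (Fd mu y <= Fd mu (t + d1)) by (apply Fd_mono; auto; lra).
  apply Rabs_def1; lra. Qed.

Lemma quantile {I} (mu : (Omega I -> Prop) -> R) : is_prob_measure (Borel I) mu ->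
  (forall t, mu (fun w : Omega I => proj1_sig w = t) = 0) -> forall c, 0 < c < 1 -> exists z, Fd mu z = c.
Proof. intros Hm Hna c Hc. destruct (Fd_low mu Hm c ltac:(lra)) as [x Hx]. destruct (Fd_high mu Hm (1 - c) ltac:(lra)) as [y Hy].
  assert (x < y). { apply Rnot_le_lt; intro. assert (Fd mu y <= Fd mu x) by (apply Fd_mono; auto). lra. }
  destruct (IVT (fun t => Fd mu t - c) x y) as [z [_ Hz]]; auto.
  apply continuity_minus. apply Fd_cont; auto. apply continuity_const. intros a b; auto.
  lra. lra. exists z. lra. Qed.
Definition Bk {I} (m : nat) (c : nat -> R) (k : nat) (w : Omega I) : Prop :=
  (k = 0%nat \/ c k < proj1_sig w) /\ (k = (m - 1)%nat \/ proj1_sig w <= c (S k)).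

Lemma borel_Bk {I} m c k : Borel I (@Bk I m c k).
Proof. pose proof (borel_sa I) as HF. unfold Bk. apply sa_and; auto; apply sa_or; auto; try apply sa_const; auto.
  apply (meas_gt (Borel I) (@proj1_sig R I)); auto; apply meas_val. apply borel_le. Qed.

Lemma INR_div_le i j m : (0 < m)%nat -> INR j / INR m <= INR i / INR m -> (j <= i)%nat.
Proof. intros Hm H. apply INR_le. assert (0 < INR m) by (apply lt_0_INR; lia).
  apply (Rmult_le_reg_r (/ INR m)). apply Rinv_0_lt_compat; lra. exact H. Qed.

Lemma c_mono {I} (mu : (Omega I -> Prop) -> R) m c : is_prob_measure (Borel I) mu -> (2 <= m)%nat ->
  (forall k, (1 <= k <= m - 1)%nat -> Fd mu (c k) = INR k / INR m) ->
  forall i j, (1 <= i)%nat -> (i <= j)%nat -> (j <= m - 1)%nat -> c i <= c j.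
Proof. intros Hm Hm2 Hc i j Hi Hij Hj. destruct (Nat.eq_dec i j) as [E|E]. subst; lra.
  apply Rnot_lt_le; intro Hl. assert (Fd mu (c j) <= Fd mu (c i)) by (apply Fd_mono; auto; lra).
  rewrite !Hc in H by lia. apply INR_div_le in H; lia. Qed.

Lemma mu_Bk {I} (mu : (Omega I -> Prop) -> R) m c : is_prob_measure (Borel I) mu -> (2 <= m)%nat ->
  (forall k, (1 <= k <= m - 1)%nat -> Fd mu (c k) = INR k / INR m) ->
  forall k, (k < m)%nat -> mu (@Bk I m c k) = / INR m.
Proof. intros Hm Hm2 Hc k Hk. pose proof (borel_sa I) as HF.
  assert (Hmpos : 0 < INR m) by (apply lt_0_INR; lia).
  set (L := fun w : Omega I => k = 0%nat \/ c k < proj1_sig w).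
  set (U := fun w : Omega I => k = (m - 1)%nat \/ proj1_sig w <= c (S k)).
  assert (HL : Borel I L) by (apply sa_or; auto; [apply sa_const; auto| apply (meas_gt (Borel I) (@proj1_sig R I)); auto; apply meas_val]).
  assert (HU : Borel I U) by (apply sa_or; auto; [apply sa_const; auto| apply borel_le]).
  assert (MU : mu U = INR (S k) / INR m).
  { destruct (Nat.eq_dec k (m - 1)) as [E|E].
    - rewrite (mu_ext mu U (fun _ => True)) by (intro; unfold U; tauto). rewrite (mu_True (Borel I)); auto.
      replace (S k) with m by lia. field; lra.
    - rewrite (mu_ext mu U (fun w => proj1_sig w <= c (S k))) by (intro; unfold U; tauto). apply Hc; lia. }
  assert (ML : mu (fun w => ~ L w) = INR k / INR m).
  { destruct (Nat.eq_dec k 0) as [E|E].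
    - rewrite (mu_zero (Borel I) mu) by (auto; intro; unfold L; tauto). subst; simpl; field; lra.
    - rewrite (mu_ext mu _ (fun w => proj1_sig w <= c k)). apply Hc; lia.
      intro w; unfold L; set (v := proj1_sig w). split. intro H. apply Rnot_lt_le. tauto. intros H [H'|H']; lia || lra. }
  assert (Hsub : forall w, ~ L w -> U w).
  { intros w Hw. unfold U. destruct (Nat.eq_dec k (m - 1)) as [E|E]; auto. right.
    unfold L in Hw. assert (k <> 0%nat) by tauto. assert (~ c k < proj1_sig w) by tauto.
    pose proof (c_mono mu m c Hm Hm2 Hc k (S k) ltac:(lia) ltac:(lia) ltac:(lia)). set (v := proj1_sig w) in *. lra. }
  rewrite (mu_split (Borel I) mu U L HF Hm HU HL) in MU.
  rewrite (mu_ext mu (fun x => U x /\ ~ L x) (fun x => ~ L x)) in MU by (intro x; split; [tauto|intro; split; auto]).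
  rewrite ML in MU. unfold Bk. rewrite (mu_ext mu _ (fun x => U x /\ L x)) by (intro; unfold U, L; tauto).
  rewrite S_INR in MU. apply (Rplus_eq_reg_r (INR k / INR m)). rewrite MU. field; lra. Qed.

Lemma Bk_cover {I} m c (w : Omega I) : (1 <= m)%nat -> exists k, (k < m)%nat /\ Bk m c k w.
Proof. intro Hm.
  assert (H : forall n j, (m - 1 - j)%nat = n -> (j < m)%nat -> (j = 0%nat \/ c j < proj1_sig w) -> exists k, (k < m)%nat /\ Bk m c k w).
  { induction n; intros j Hn Hj HL.
    - exists j; split; auto. split; auto. left; lia.
    - destruct (Rle_lt_dec (proj1_sig w) (c (S j))) as [Hle|Hlt].
      + exists j; split; auto. split; auto.
      + apply (IHn (S j)); auto; lia. }
  apply (H (m - 1 - 0)%nat 0%nat); auto; lia. Qed.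

Lemma Bk_order {I} (mu : (Omega I -> Prop) -> R) m c : is_prob_measure (Borel I) mu -> (2 <= m)%nat ->
  (forall k, (1 <= k <= m - 1)%nat -> Fd mu (c k) = INR k / INR m) ->
  forall a b (w1 w2 y : Omega I), (a + 2 <= b)%nat -> (b < m)%nat -> Bk m c a w1 -> Bk m c b w2 -> Bk m c (S a) y ->
  proj1_sig w1 < proj1_sig y /\ proj1_sig y < proj1_sig w2.
Proof. intros Hm Hm2 Hc a b w1 w2 y Hab Hb [_ [A1|A1]] [[B1|B1] _] [[Y1|Y1] [Y2|Y2]]; try lia.
  pose proof (c_mono mu m c Hm Hm2 Hc (S (S a)) b ltac:(lia) ltac:(lia) ltac:(lia)).
  set (v1 := proj1_sig w1) in *. set (v2 := proj1_sig w2) in *. set (u := proj1_sig y) in *. lra. Qed.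
Lemma finite_union_le {X} F (mu : (X -> Prop) -> R) (S : nat -> X -> Prop) n : is_sigma_algebra F -> is_prob_measure F mu ->
  (forall i, F (S i)) -> mu (fun w => exists i, (i < n)%nat /\ S i w) <= Rsum_list (map (fun i => mu (S i)) (seq 0 n)).
Proof. intros HF Hm HS. induction n.
  - simpl. rewrite (mu_zero F mu); auto. unfold Rsum_list; simpl; lra. intros x [i [Hi _]]; lia.
  - rewrite seq_S, map_app, Rsum_app. cbn [map]. unfold Rsum_list at 2. simpl fold_right.
    rewrite (mu_ext mu _ (fun w => (exists i, (i < n)%nat /\ S i w) \/ S n w)).
    2:{ intro w; split. intros [i [Hi Hs]]. destruct (Nat.eq_dec i n). subst; auto. left; exists i; split; auto; lia.
        intros [[i [Hi Hs]]|Hs]. exists i; split; auto. exists n; split; auto. }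
    eapply Rle_trans. apply (mu_union_le F); auto.
    apply (sa_U F); auto. intro i. apply sa_and; auto. apply sa_const; auto. lra. Qed.

Lemma sa_exists_lt {X} F (S : nat -> X -> Prop) n : is_sigma_algebra F -> (forall i, F (S i)) -> F (fun w => exists i, (i < n)%nat /\ S i w).
Proof. intros HF HS. apply (sa_U F); auto. intro i. apply sa_and; auto. apply sa_const; auto. Qed.

Lemma CV_sum {A} (f : A -> nat -> R) (l : A -> R) L : (forall a, In a L -> Un_cv (f a) (l a)) ->
  Un_cv (fun n => Rsum_list (map (fun a => f a n) L)) (Rsum_list (map l L)).
Proof. induction L as [|a L IH]; intro H.
  - simpl. unfold Rsum_list; simpl. apply Un_cv_const.
  - cbn [map]. apply (Un_cv_ext (fun n => f a n + Rsum_list (map (fun a => f a n) L))). intro; reflexivity.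
    rewrite Rsum_cons. apply CV_plus. apply H; simpl; auto. apply IH; intros; apply H; simpl; auto. Qed.

Lemma Rsum_const {A} c (L : list A) : Rsum_list (map (fun _ => c) L) = INR (length L) * c.
Proof. induction L; unfold Rsum_list in *; simpl in *. ring. rewrite IHL. destruct (length L); simpl; ring. Qed.

Lemma Un_cv_shift s l : Un_cv s l -> Un_cv (fun n => s (S n)) l.
Proof. intros H eps He. destruct (H eps He) as [N HN]. exists N. intros; apply HN; lia. Qed.

Lemma Xv_0 {I} (T : Omega I -> Omega I) d w : Xv T (S d) w 0 = proj1_sig (iterT (S d) T w).
Proof. reflexivity. Qed.
Lemma Xv_top {I} (T : Omega I -> Omega I) d w : Xv T (S d) w (S d) = proj1_sig w.
Proof. unfold Xv. rewrite Nat.sub_diag. reflexivity. Qed.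
Lemma Xv_mid {I} (T : Omega I -> Omega I) d w j : (j <= S d)%nat -> Xv T (S d) w (S d - j) = proj1_sig (iterT j T w).
Proof. intro H. unfold Xv. replace (S d - (S d - j))%nat with j by lia. reflexivity. Qed.

Lemma nonatomic_case {I} (mu : (Omega I -> Prop) -> R) (T : Omega I -> Omega I) :
  is_prob_measure (Borel I) mu -> measurable_map (Borel I) T -> strong_mixing (Borel I) mu T ->
  (forall t, mu (fun w : Omega I => proj1_sig w = t) = 0) -> Un_cv (fun d => mu (Ud T d)) 0.
Proof. intros Hm HT Hmix Hna eps He. pose proof (borel_sa I) as HF. set (F := Borel I) in *.
  destruct (inv_small (eps / 6)) as [n0 Hn0]. lra.
  set (m := S (S n0)).
  assert (Hm2 : (2 <= m)%nat) by (unfold m; lia).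
  assert (Hmpos : 0 < INR m) by (apply lt_0_INR; lia).
  assert (H3m : 3 / INR m < eps / 2).
  { assert (/ INR m <= / INR (S n0)) by (apply inv_dec). unfold Rdiv. lra. }
  assert (Hq : forall k, exists z, (1 <= k <= m - 1)%nat -> Fd mu z = INR k / INR m).
  { intro k. destruct (le_lt_dec 1 k); [destruct (le_lt_dec k (m - 1))|].
    - destruct (quantile mu Hm Hna (INR k / INR m)) as [z Hz].
      + assert (1 <= INR k) by (apply (le_INR 1); lia). assert (INR k < INR m) by (apply lt_INR; lia).
        split. apply Rdiv_lt_0_compat; lra. apply (Rmult_lt_reg_r (INR m)); auto. unfold Rdiv.
        rewrite Rmult_assoc, Rinv_l; lra.
      + exists z; auto.
    - exists 0; intro; lia.
    - exists 0; intro; lia. }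
  destruct (functional_choice _ Hq) as [c Hc].
  set (B := @Bk I m c).
  assert (HB : forall k, F (B k)) by (intro; apply borel_Bk).
  assert (MB : forall k, (k < m)%nat -> mu (B k) = / INR m) by (intros; apply (mu_Bk mu m c); auto).
  set (N := fun a x => exists b, (b < m)%nat /\ ((a <= S b)%nat /\ (b <= S a)%nat /\ B b x)).
  assert (HN : forall a, F (N a)).
  { intro a. apply (sa_exists_lt F (fun b x => (a <= S b)%nat /\ (b <= S a)%nat /\ B b x) m); auto.
    intro b; apply sa_and; auto; [apply sa_const; auto|apply sa_and; auto; apply sa_const; auto]. }
  assert (MN : forall a, mu (N a) <= 3 / INR m).
  { intro a. set (B' := fun k x => (k < m)%nat /\ B k x).
    assert (HB' : forall k, F (B' k)) by (intro; apply sa_and; auto; apply sa_const; auto).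
    assert (MB' : forall k, mu (B' k) <= / INR m).
    { intro k. destruct (le_lt_dec m k). rewrite (mu_zero F mu) by (auto; intros x [Hx _]; lia).
      assert (0 < / INR m) by (apply Rinv_0_lt_compat; lra). lra.
      rewrite <- (MB k l). apply (mu_mono F mu (B' k) (B k) HF Hm (HB' k) (HB k)). intros x [_ Hx]; exact Hx. }
    eapply Rle_trans. apply (mu_mono F mu (N a) (fun x => B' (pred a) x \/ (B' a x \/ B' (S a) x))); auto.
    apply sa_or; auto; apply sa_or; auto.
    intros x [b [Hb [H1 [H2 Hx]]]]. unfold B'. assert (b = pred a \/ b = a \/ b = S a) as [E|[E|E]] by lia; subst; auto.
    eapply Rle_trans. apply (mu_union_le F); auto. apply sa_or; auto.
    eapply Rle_trans. apply Rplus_le_compat_l. apply (mu_union_le F); auto.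
    pose proof (MB' (pred a)). pose proof (MB' a). pose proof (MB' (S a)). unfold Rdiv. lra. }
  set (f1 := fun a d => mu (fun x => N a (iterT (S d) T x) /\ B a x)).
  set (f2 := fun e d => mu (Av T (B e) d)).
  set (s := fun d => Rsum_list (map (fun a => f1 a d) (seq 0 m)) + Rsum_list (map (fun e => f2 e d) (seq 0 m))).
  set (L := Rsum_list (map (fun a => mu (N a) * mu (B a)) (seq 0 m)) + Rsum_list (map (fun _ : nat => 0) (seq 0 m))).
  assert (CVs : Un_cv s L).
  { apply CV_plus.
    - apply CV_sum. intros a Ha. unfold f1. apply (Un_cv_shift (fun n => mu (fun x => N a (iterT n T x) /\ B a x))).
      apply Hmix; auto.
    - apply CV_sum. intros e He'. unfold f2. apply (avoid_to0 F); auto.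
      apply in_seq in He'. rewrite MB by lia. apply Rinv_0_lt_compat; lra. }
  assert (HL : L < eps / 2).
  { unfold L. rewrite (Rsum_zero (fun _ : nat => 0)) by (intros; reflexivity).
    assert (Rsum_list (map (fun a => mu (N a) * mu (B a)) (seq 0 m)) <= Rsum_list (map (fun _ => 3 / INR m * / INR m) (seq 0 m))).
    { apply Rsum_le. intros a Ha. apply in_seq in Ha. rewrite MB by lia. apply Rmult_le_compat_r.
      apply Rlt_le, Rinv_0_lt_compat; lra. apply MN. }
    rewrite Rsum_const, length_seq in H.
    replace (INR m * (3 / INR m * / INR m)) with (3 / INR m) in H by (field; lra). lra. }
  assert (Hbound : forall d, mu (Ud T d) <= s d).
  { intro d. unfold s.
    eapply Rle_trans.
    apply (mu_mono F mu (Ud T d) (fun w => (exists a, (a < m)%nat /\ (N a (iterT (S d) T w) /\ B a w)) \/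
                                         (exists e, (e < m)%nat /\ Av T (B e) d w))); auto.
    apply borel_U; auto.
    apply sa_or; auto. apply (sa_exists_lt F (fun a w => N a (iterT (S d) T w) /\ B a w)); auto.
    intro a; apply sa_and; auto; apply sa_iter; auto.
    apply (sa_exists_lt F (fun e w => Av T (B e) d w)); auto. intro; apply sa_Av; auto.
    - intros w Hw. destruct (Bk_cover m c w ltac:(lia)) as [a [Ha Ba]].
      destruct (Bk_cover m c (iterT (S d) T w) ltac:(lia)) as [b [Hb Bb]].
      destruct (le_lt_dec (a + 2) b) as [Hab|Hab]; [|destruct (le_lt_dec (b + 2) a) as [Hba|Hba]].
      + right. exists (S a); split. lia. intros j Hj Bj.
        destruct (Bk_order mu m c Hm Hm2 Hc a b w (iterT (S d) T w) (iterT j T w) Hab Hb Ba Bb Bj) as [O1 O2].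
        apply (Hw (S d - j)%nat ltac:(lia)). left. unfold relx. rewrite Xv_0, Xv_top, Xv_mid by lia. split; left; lra.
      + right. exists (S b); split. lia. intros j Hj Bj.
        destruct (Bk_order mu m c Hm Hm2 Hc b a (iterT (S d) T w) w (iterT j T w) Hba Ha Bb Ba Bj) as [O1 O2].
        apply (Hw (S d - j)%nat ltac:(lia)). right. unfold relx. rewrite Xv_0, Xv_top, Xv_mid by lia. split; left; lra.
      + left. exists a; split; auto. split; auto. exists b; split; [lia|split; [lia|split; [lia|exact Bb]]].
    - eapply Rle_trans. apply (mu_union_le F); auto.
      apply (sa_exists_lt F (fun a w => N a (iterT (S d) T w) /\ B a w)); auto.
      intro a; apply sa_and; auto; apply sa_iter; auto.
      apply (sa_exists_lt F (fun e w => Av T (B e) d w)); auto. intro; apply sa_Av; auto.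
      apply Rplus_le_compat.
      + apply (finite_union_le F mu (fun a w => N a (iterT (S d) T w) /\ B a w)); auto.
        intro a; apply sa_and; auto; apply sa_iter; auto.
      + apply (finite_union_le F mu (fun e w => Av T (B e) d w)); auto. intro; apply sa_Av; auto. }
  destruct (CVs (eps / 2) ltac:(lra)) as [M HM]. exists M. intros d Hd. specialize (HM d Hd).
  unfold Rdist in *. apply Rabs_def2 in HM. rewrite Rminus_0_r.
  assert (0 <= mu (Ud T d)) by (apply (mu_ge0 F); auto; apply borel_U; auto).
  pose proof (Hbound d). rewrite Rabs_right; lra. Qed.
Theorem corollary2 (I : R -> Prop) (mu : (Omega I -> Prop) -> R)
  (T : Omega I -> Omega I) :
  is_interval I ->
  is_prob_measure (Borel I) mu ->
  measurable_map (Borel I) T ->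
  measure_preserving (Borel I) mu T ->
  strong_mixing (Borel I) mu T ->
  Un_cv (fun d => h_sort mu (@proj1_sig R I) T d - h_cond mu (@proj1_sig R I) T d) 0.
Proof.
  intros Hint Hm HT Hp Hmix.
  assert (U0 : Un_cv (fun d => mu (Ud T d)) 0).
  { destruct (classic (exists t, 0 < mu (fun w : Omega I => proj1_sig w = t))) as [[t Ht]|N].
    - apply (dirac_case mu T t); auto.
    - apply nonatomic_case; auto. intro t. apply Rle_antisym.
      + apply Rnot_lt_le; intro; apply N; eauto.
      + apply (mu_ge0 (Borel I)); auto. apply (meas_eq2 (Borel I) (@proj1_sig R I) (fun _ => t)).
        apply borel_sa. apply meas_val. apply meas_const, borel_sa. }
  pose proof ln_lt_2 as L2.
  intros eps He. destruct (U0 (eps / ln 2)) as [N HN]. apply Rdiv_lt_0_compat; lra.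
  exists N. intros d Hd. specialize (HN d Hd). unfold Rdist in *. rewrite Rminus_0_r in *.
  destruct (entropy_bound mu T d Hm HT) as [B1 B2].
  assert (E : h_sort mu (@proj1_sig R I) T d - h_cond mu (@proj1_sig R I) T d =
              H_ord mu (@proj1_sig R I) T (S d) - H_ord2 mu (@proj1_sig R I) T d) by (unfold h_sort, h_cond; ring).
  rewrite E. apply Rabs_def2 in HN. destruct HN as [HN _].
  assert (ln 2 * mu (Ud T d) < eps).
  { apply (Rmult_lt_compat_l (ln 2)) in HN; [|lra]. replace (ln 2 * (eps / ln 2)) with eps in HN by (field; lra). exact HN. }
  rewrite Rabs_right; lra.
Qed.
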